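(* In the construction described in the context, for every $k\in\mathbb{N}$ the space $(P_k,\rho_k)$ is compact and $2$-quasiconvex. Moreover, $(P_\infty,\rho_\infty)$ is compact and $2$-quasiconvex, and the sets $i_k(P_k)$ converge to $P_\infty$ in the Hausdorff–Pompeiu distance of $(P_\infty,\rho_\infty)$.
   Context: Construction. Let $(e_n)$ be the canonical basis of $\ell^1(\mathbb{N})$; $\alpha(t)=t$ on $[0,\frac12]$, $\alpha(t)=1-t$ on $[\frac12,1]$; $S_n=\{te_1+\alpha(t)e_{n+1}:t\in[0,1]\}$; $x_n=(\frac12-\frac1{2^n})e_1$, $x_\infty=\frac12e_1$; $Y=\bigcup_{n\ge1}(2^{-(n+1)}S_n+x_n)\cup\{x_\infty\}$ with the $\ell^1$ metric $\theta$. $Y$ is the image of an arc-length parametrized injective curve $\gamma:[0,1]\to Y$ with $\gamma(0)=0$, $\gamma(1)=x_\infty$. For $r>0$ let $\theta_r(s,t)=r\,\theta(\gamma(s/r),\gamma(t/r))$ on $[0,r]$. Set $P_1=[0,1]$, $\rho_1=\theta_1$, $L_1=\{1\}$. Given $(P_k,\rho_k)$ with $P_k\subset[0,1]^k$ and $L_k\subset P_k$, let $\pi_k$ denote the $k$-th coordinate, choose a countable dense subset $Q_k=\{q_n:n\in\mathbb{N}\}$ (distinct $q_n$) of $P_k\setminus L_k$ with $\pi_k$ injective on $Q_k$ and $0\notin\pi_k(Q_k)$, set $r_n=2^{-(n+k)}$, $d_n=\theta_{r_n}$, and let $P_{k+1}=\{(x,0):x\in P_k\setminus Q_k\}\cup\{(q_n,y):n\in\mathbb{N},y\in[0,r_n]\}\subset[0,1]^{k+1}$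 with metric $\rho_{k+1}((x_1,y_1),(x_2,y_2))$ equal to $d_n(y_1,y_2)$ if $x_1=x_2=q_n$; $d_n(y_1,0)+\rho_k(x_1,x_2)+d_m(0,y_2)$ if $x_1=q_n,x_2=q_m$, $n\ne m$; $d_n(y_1,0)+\rho_k(x_1,x_2)$ if $x_1=q_n$, $x_2\notin Q_k$ (and symmetrically); $\rho_k(x_1,x_2)$ if $x_1,x_2\notin Q_k$. Let $L_{k+1}=(L_k\times\{0\})\cup\{(q_n,r_n):n\in\mathbb{N}\}$. Let $i_k:P_k\to[0,1]^{\mathbb{N}}$, $i_k(x)=(x_1,\dots,x_k,0,0,\dots)$; $\mathcal P_\infty=\bigcup_k i_k(P_k)$ with the metric $\rho_\infty(x,y)=\rho_k(i_k^{-1}x,i_k^{-1}y)$ for $x,y\in i_k(P_k)$; $(P_\infty,\rho_\infty)$ is the completion of $(\mathcal P_\infty,\rho_\infty)$. A metric space is $C$-quasiconvex if its intrinsic distance (infimum of lengths of continuous curves joining two points) is at most $C$ times its metric. Hausdorff–Pompeiu distance: $d_H(A,B)=\max\{\sup_{a\in A}\mathrm{dist}(a,B),\sup_{b\in B}\mathrm{dist}(b,A)\}$. *)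

(* Defs.v *)
From Stdlib Require Import Reals Lra Lia List Classical ClassicalEpsilon.
From Coquelicot Require Import Coquelicot.
Open Scope R_scope.

Definition is_metric {T : Type} (d : T -> T -> R) : Prop :=
  (forall x y, 0 <= d x y) /\ (forall x y, d x y = 0 <-> x = y) /\
  (forall x y, d x y = d y x) /\ (forall x y z, d x z <= d x y + d y z).

Definition cauchy_seq {T : Type} (d : T -> T -> R) (u : nat -> T) : Prop :=
  forall eps, 0 < eps -> exists N, forall n p, (N <= n)%nat -> (N <= p)%nat -> d (u n) (u p) < eps.

Definition complete_space {T : Type} (d : T -> T -> R) : Prop :=
  forall u, cauchy_seq d u -> exists l, forall eps, 0 < eps ->
    exists N, forall n, (N <= n)%nat -> d (u n) l < eps.

Definition open_in {T : Type} (X : T -> Prop) (d : T -> T -> R) (U : T -> Prop) : Prop :=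
  forall x, X x -> U x -> exists r, 0 < r /\ forall y, X y -> d x y < r -> U y.

Definition compact_space {T : Type} (X : T -> Prop) (d : T -> T -> R) : Prop :=
  forall (I : Type) (U : I -> T -> Prop),
    (forall i, open_in X d (U i)) -> (forall x, X x -> exists i, U i x) ->
    exists l : list I, forall x, X x -> exists i, In i l /\ U i x.

Fixpoint psum {T : Type} (d : T -> T -> R) (g : R -> T) (t : nat -> R) (n : nat) : R :=
  match n with
  | O => 0
  | S k => psum d g t k + d (g (t k)) (g (t (S k)))
  end.

Definition is_partition (a b : R) (t : nat -> R) (n : nat) : Prop :=
  t O = a /\ t n = b /\ forall i, (i < n)%nat -> t i <= t (S i).

Definition length_le {T : Type} (d : T -> T -> R) (g : R -> T) (a b L : R) : Prop :=
  forall t n, is_partition a b t n -> psum d g t n <= L.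

Definition length_is {T : Type} (d : T -> T -> R) (g : R -> T) (a b L : R) : Prop :=
  length_le d g a b L /\
  forall eps, 0 < eps -> exists t n, is_partition a b t n /\ L - eps < psum d g t n.

Definition curve_in {T : Type} (X : T -> Prop) (d : T -> T -> R) (g : R -> T) (a b : R) : Prop :=
  a <= b /\ (forall s, a <= s <= b -> X (g s)) /\
  (forall s, a <= s <= b -> forall eps, 0 < eps -> exists delta, 0 < delta /\
     forall s', a <= s' <= b -> Rabs (s' - s) < delta -> d (g s') (g s) < eps).

Definition quasiconvex {T : Type} (X : T -> Prop) (d : T -> T -> R) (C : R) : Prop :=
  forall x y, X x -> X y -> forall eps, 0 < eps ->
    exists a b (g : R -> T), curve_in X d g a b /\ g a = x /\ g b = y /\
      length_le d g a b (C * d x y + eps).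

Definition hausdorff_le {T : Type} (d : T -> T -> R) (A B : T -> Prop) (e : R) : Prop :=
  (forall a, A a -> forall e', e < e' -> exists b, B b /\ d a b < e') /\
  (forall b, B b -> forall e', e < e' -> exists a, A a /\ d b a < e').

(* Elements of l^1(N) are sequences nat -> R; e_1 is index 0,          *)
(* e_{n+1} is index n.                                                 *)

Definition theta (u v : nat -> R) : R := Series (fun i => Rabs (u i - v i)).

Definition alpha (t : R) : R := if Rle_dec t (1/2) then t else 1 - t.

Definition x_inf : nat -> R := fun i => if Nat.eqb i 0 then 1/2 else 0.

Definition Yset (y : nat -> R) : Prop :=
  (exists n : nat, (1 <= n)%nat /\ exists t, 0 <= t <= 1 /\
     y = fun i => if Nat.eqb i 0 then / 2 ^ (n + 1) * t + (1/2 - / 2 ^ n)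
                  else if Nat.eqb i n then / 2 ^ (n + 1) * alpha t else 0)
  \/ y = x_inf.

Definition gamma_hyp (gamma : R -> nat -> R) : Prop :=
  (forall t, 0 <= t <= 1 -> Yset (gamma t)) /\
  (forall y, Yset y -> exists t, 0 <= t <= 1 /\ gamma t = y) /\
  (forall s t, 0 <= s <= 1 -> 0 <= t <= 1 -> gamma s = gamma t -> s = t) /\
  gamma 0 = (fun _ => 0) /\ gamma 1 = x_inf /\
  (forall s t, 0 <= s -> s <= t -> t <= 1 -> length_is theta gamma s t (t - s)).

Definition theta_r (gamma : R -> nat -> R) (r s t : R) : R :=
  r * theta (gamma (s / r)) (gamma (t / r)).

(* The inductive construction.  Level m (nat) is the paper's k = m+1.  *)
(* Points of P_k are stored via i_k, i.e. as sequences nat -> R with    *)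
(* coordinates 0..m (x_1..x_k) and zeros afterwards.                     *)
(* q m n is the paper's q_{n+1} at stage k = m+1 (paper's N = {1,2,..}) *)

Definition trunc (m : nat) (x : nat -> R) : nat -> R :=
  fun i => if Nat.ltb i m then x i else 0.

(* r_n = 2^{-(n+k)} with paper indices n' = n+1, k = m+1 *)
Definition rad (m n : nat) : R := / 2 ^ (n + m + 2).

Definition idx (q : nat -> nat -> nat -> R) (m : nat) (x : nat -> R) : nat :=
  epsilon (inhabits 0%nat) (fun n => trunc (S m) x = q m n).

Fixpoint level (gamma : R -> nat -> R) (q : nat -> nat -> nat -> R) (m : nat)
  : ((nat -> R) -> Prop) * ((nat -> R) -> (nat -> R) -> R) * ((nat -> R) -> Prop) :=
  match m with
  | O =>
    ((fun x => 0 <= x O <= 1 /\ forall i, (0 < i)%nat -> x i = 0),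
     (fun x y => theta_r gamma 1 (x O) (y O)),
     (fun x => x O = 1 /\ forall i, (0 < i)%nat -> x i = 0))
  | S m' =>
    let '(P, rho, L) := level gamma q m' in
    let Q := fun x => exists n, x = q m' n in
    let d := fun n => theta_r gamma (rad m' n) in
    ((fun x => (forall i, (S m' < i)%nat -> x i = 0) /\
        ((P (trunc (S m') x) /\ ~ Q (trunc (S m') x) /\ x (S m') = 0) \/
         (exists n, trunc (S m') x = q m' n /\ 0 <= x (S m') <= rad m' n))),
     (fun x1 x2 =>
        let h1 := if excluded_middle_informative (Q (trunc (S m') x1))
                  then d (idx q m' x1) (x1 (S m')) 0 else 0 in
        let h2 := if excluded_middle_informative (Q (trunc (S m') x2))
                  then d (idx q m' x2) 0 (x2 (S m')) else 0 in
        if excluded_middle_informative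
             (Q (trunc (S m') x1) /\ trunc (S m') x1 = trunc (S m') x2)
        then d (idx q m' x1) (x1 (S m')) (x2 (S m'))
        else h1 + rho (trunc (S m') x1) (trunc (S m') x2) + h2),
     (fun x => (forall i, (S m' < i)%nat -> x i = 0) /\
        ((L (trunc (S m') x) /\ x (S m') = 0) \/
         (exists n, trunc (S m') x = q m' n /\ x (S m') = rad m' n))))
  end.

Definition Pk gamma q m := fst (fst (level gamma q m)).
Definition rhok gamma q m := snd (fst (level gamma q m)).
Definition Lk gamma q m := snd (level gamma q m).

Definition valid_choice (P : (nat -> R) -> Prop) (rho : (nat -> R) -> (nat -> R) -> R)
  (L : (nat -> R) -> Prop) (m : nat) (qm : nat -> nat -> R) : Prop :=
  (forall n, P (qm n) /\ ~ L (qm n)) /\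
  (forall n n', qm n = qm n' -> n = n') /\
  (forall n n', qm n m = qm n' m -> n = n') /\
  (forall n, qm n m <> 0) /\
  (forall x, P x -> ~ L x -> forall eps, 0 < eps -> exists n, rho x (qm n) < eps).

Definition choices_hyp gamma q : Prop :=
  forall m, valid_choice (Pk gamma q m) (rhok gamma q m) (Lk gamma q m) m (q m).

Definition Pinf gamma q (x : nat -> R) : Prop := exists m, Pk gamma q m x.

Definition rho_inf gamma q (x y : nat -> R) : R :=
  rhok gamma q (epsilon (inhabits 0%nat) (fun m => Pk gamma q m x /\ Pk gamma q m y)) x y.

Definition is_completion gamma q {T : Type} (d : T -> T -> R) (e : (nat -> R) -> T) : Prop :=
  is_metric d /\ complete_space d /\
  (forall x y, Pinf gamma q x -> Pinf gamma q y -> d (e x) (e y) = rho_inf gamma q x y) /\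
  (forall z eps, 0 < eps -> exists x, Pinf gamma q x /\ d (e x) z < eps).

(* Main.v *)
Require Import Defs.
From Stdlib Require Import Reals Lra Lia List Classical ClassicalEpsilon FunctionalExtensionality.
From Coquelicot Require Import Coquelicot.
Open Scope R_scope.

Definition MX {T : Type} (X : T -> Prop) (d : T -> T -> R) : Prop :=
  (forall x y, X x -> X y -> 0 <= d x y) /\ (forall x, X x -> d x x = 0) /\
  (forall x y, X x -> X y -> d x y = d y x) /\
  (forall x y z, X x -> X y -> X z -> d x z <= d x y + d y z).

Definition lip_path {T : Type} (X : T -> Prop) (d : T -> T -> R) (x y : T) (L : R) : Prop :=
  0 <= L /\ exists g : R -> T, g 0 = x /\ g L = y /\ (forall s, 0 <= s <= L -> X (g s)) /\
    (forall s t, 0 <= s <= L -> 0 <= t <= L -> d (g s) (g t) <= Rabs (s - t)).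

Lemma partition_bounds (a b : R) (t : nat -> R) (n : nat) :
  is_partition a b t n -> forall i, (i <= n)%nat -> a <= t i <= b.
Proof.
  intros [H0 [Hn Hm]].
  assert (A : forall i, (i <= n)%nat -> a <= t i).
  { induction i; intros Hi. rewrite H0; lra.
    specialize (Hm i ltac:(lia)). specialize (IHi ltac:(lia)). lra. }
  assert (B : forall k i, (i + k = n)%nat -> t i <= b).
  { induction k; intros i Hi. replace i with n by lia. lra.
    specialize (IHk (S i) ltac:(lia)). specialize (Hm i ltac:(lia)). lra. }
  intros i Hi. split. apply A; auto. apply (B (n - i)%nat). lia.
Qed.

Lemma psum_lip {T : Type} (d : T -> T -> R) (g : R -> T) (L : R) :
  (forall s t, 0 <= s <= L -> 0 <= t <= L -> d (g s) (g t) <= Rabs (s - t)) ->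
  forall t n, (forall i, (i <= n)%nat -> 0 <= t i <= L) -> (forall i, (i < n)%nat -> t i <= t (S i)) ->
  psum d g t n <= t n - t O.
Proof.
  intros Hg t n. induction n; intros Hb Hm; simpl. lra.
  assert (IH := IHn (fun i Hi => Hb i ltac:(lia)) (fun i Hi => Hm i ltac:(lia))).
  assert (H1 := Hg (t n) (t (S n)) (Hb n ltac:(lia)) (Hb (S n) ltac:(lia))).
  assert (H2 := Hm n ltac:(lia)).
  rewrite Rabs_minus_sym, Rabs_right in H1 by lra. lra.
Qed.

Lemma lip_quasi {T : Type} (X : T -> Prop) (d : T -> T -> R) (C : R) :
  (forall x y, X x -> X y -> forall eps, 0 < eps -> exists L, L <= C * d x y + eps /\ lip_path X d x y L) ->
  quasiconvex X d C.
Proof.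
  intros H x y Hx Hy eps Heps.
  destruct (H x y Hx Hy eps Heps) as [L [HL [HL0 [g [g0 [gL [gX gd]]]]]]].
  exists 0, L, g. split; [|split; [auto|split; [auto|]]].
  - split; [lra|split; [auto|]].
    intros s Hs e He. exists e. split; auto. intros s' Hs' Hd.
    eapply Rle_lt_trans; [apply gd; auto|auto].
  - intros t n Hp. pose proof (partition_bounds _ _ _ _ Hp) as Hb.
    destruct Hp as [H0 [Hn Hm]].
    eapply Rle_trans. apply (psum_lip d g L gd t n Hb Hm). lra.
Qed.

Lemma lip_concat {T : Type} (X : T -> Prop) (d : T -> T -> R) x y z L1 L2 :
  (forall a b c, X a -> X b -> X c -> d a c <= d a b + d b c) ->
  lip_path X d x y L1 -> lip_path X d y z L2 -> lip_path X d x z (L1 + L2).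
Proof.
  intros Htr [H1 [g1 [g10 [g1L [g1X g1d]]]]] [H2 [g2 [g20 [g2L [g2X g2d]]]]].
  split. lra.
  exists (fun s => if Rle_dec s L1 then g1 s else g2 (s - L1)).
  split; [|split; [|split]].
  - destruct (Rle_dec 0 L1); [auto|lra].
  - destruct (Rle_dec (L1 + L2) L1).
    + replace (L1 + L2) with L1 by lra. rewrite g1L, <- g20, <- g2L. f_equal. lra.
    + rewrite <- g2L. f_equal. lra.
  - intros s Hs. destruct (Rle_dec s L1). apply g1X; lra. apply g2X; lra.
  - intros s t Hs Ht.
    destruct (Rle_dec s L1); destruct (Rle_dec t L1).
    + apply g1d; lra.
    + assert (X1 : X (g1 s)) by (apply g1X; lra).
      assert (X2 : X (g2 (t - L1))) by (apply g2X; lra).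
      assert (Xy : X y) by (rewrite <- g1L; apply g1X; lra).
      eapply Rle_trans. apply (Htr _ y _ X1 Xy X2).
      rewrite <- g1L at 1. rewrite <- g20 at 1.
      assert (A1 := g1d s L1 ltac:(lra) ltac:(lra)).
      assert (A2 := g2d 0 (t - L1) ltac:(lra) ltac:(lra)).
      rewrite Rabs_left1 in A1 by lra. rewrite Rabs_left1 in A2 by lra.
      rewrite Rabs_left1 by lra. lra.
    + assert (X1 : X (g2 (s - L1))) by (apply g2X; lra).
      assert (X2 : X (g1 t)) by (apply g1X; lra).
      assert (Xy : X y) by (rewrite <- g1L; apply g1X; lra).
      eapply Rle_trans. apply (Htr _ y _ X1 Xy X2).
      rewrite <- g1L at 2. rewrite <- g20 at 1.
      assert (A1 := g1d L1 t ltac:(lra) ltac:(lra)).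
      assert (A2 := g2d (s - L1) 0 ltac:(lra) ltac:(lra)).
      rewrite Rabs_right in A1 by lra. rewrite Rabs_right in A2 by lra.
      rewrite Rabs_right by lra. lra.
    + replace (s - t) with ((s - L1) - (t - L1)) by lra. apply g2d; lra.
Qed.

Lemma lip_rev {T : Type} (X : T -> Prop) (d : T -> T -> R) x y L :
  lip_path X d x y L -> lip_path X d y x L.
Proof.
  intros [H0 [g [g0 [gL [gX gd]]]]]. split; auto.
  exists (fun s => g (L - s)). split; [|split; [|split]].
  - rewrite Rminus_0_r; auto.
  - replace (L - L) with 0 by lra; auto.
  - intros s Hs; apply gX; lra.
  - intros s t Hs Ht. replace (s - t) with ((L - t) - (L - s)) by lra.
    rewrite Rabs_minus_sym. apply gd; lra.
Qed.

Lemma lip_const {T : Type} (X : T -> Prop) (d : T -> T -> R) x :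
  X x -> d x x <= 0 -> lip_path X d x x 0.
Proof.
  intros Hx Hd. split. lra. exists (fun _ => x). repeat split; auto.
  intros s t _ _. eapply Rle_trans; [apply Hd|apply Rabs_pos].
Qed.

Lemma lip_map {T T' : Type} (X : T -> Prop) (d : T -> T -> R) (X' : T' -> Prop) (d' : T' -> T' -> R)
  (f : T -> T') x y L :
  (forall a, X a -> X' (f a)) -> (forall a b, X a -> X b -> d' (f a) (f b) <= d a b) ->
  lip_path X d x y L -> lip_path X' d' (f x) (f y) L.
Proof.
  intros HX Hd [H0 [g [g0 [gL [gX gd]]]]]. split; auto.
  exists (fun s => f (g s)). split; [rewrite g0; auto|split; [rewrite gL; auto|split]].
  - intros s Hs; apply HX, gX; auto.
  - intros s t Hs Ht. eapply Rle_trans. apply Hd; apply gX; auto. apply gd; auto.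
Qed.

Lemma lip_seg {T : Type} (X : T -> Prop) (d : T -> T -> R) (f : R -> T) a b :
  (forall s, a <= s <= b -> X (f s)) ->
  (forall s t, a <= s <= b -> a <= t <= b -> d (f s) (f t) <= Rabs (s - t)) ->
  forall u v, a <= u <= b -> a <= v <= b -> lip_path X d (f u) (f v) (Rabs (u - v)).
Proof.
  intros HX Hd u v Hu Hv. split. apply Rabs_pos.
  destruct (Rle_dec u v).
  - rewrite Rabs_left1 by lra.
    exists (fun s => f (u + s)). split; [|split; [|split]].
    + rewrite Rplus_0_r; auto.
    + f_equal; lra.
    + intros s Hs; apply HX; lra.
    + intros s t Hs Ht. replace (s - t) with ((u + s) - (u + t)) by lra. apply Hd; lra.
  - rewrite Rabs_right by lra.
    exists (fun s => f (u - s)). split; [|split; [|split]].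
    + rewrite Rminus_0_r; auto.
    + f_equal; lra.
    + intros s Hs; apply HX; lra.
    + intros s t Hs Ht. replace (s - t) with ((u - t) - (u - s)) by lra.
      rewrite Rabs_minus_sym. apply Hd; lra.
Qed.

Lemma compact_TB {T : Type} (X : T -> Prop) (d : T -> T -> R) :
  MX X d -> compact_space X d -> forall eps, 0 < eps ->
  exists l : list T, forall x, X x -> exists p, In p l /\ X p /\ d p x < eps.
Proof.
  intros [Hp [H0 [Hs Ht]]] Hc eps He.
  destruct (Hc T (fun c y => X c /\ d c y < eps)) as [l Hl].
  - intros c y Hy [Hc' Hd]. exists (eps - d c y). split. lra.
    intros y' Hy' Hd'. split; auto. pose proof (Ht c y y' Hc' Hy Hy'). lra.
  - intros x Hx. exists x. split; auto. rewrite H0; auto.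
  - exists l. intros x Hx. destruct (Hl x Hx) as [p [Hin [HXp Hd]]]. exists p; auto.
Qed.

Definition bad {T I : Type} (U : I -> T -> Prop) (A : T -> Prop) : Prop :=
  ~ exists l : list I, forall x, A x -> exists i, In i l /\ U i x.

Lemma bad_split {T I : Type} (U : I -> T -> Prop) (A : T -> Prop) (B : T -> T -> Prop) (l : list T) :
  (forall x, A x -> exists p, In p l /\ B p x) -> bad U A ->
  exists p, In p l /\ bad U (fun x => A x /\ B p x).
Proof.
  intros Hcov Hbad. apply NNPP. intro Hn.
  apply Hbad.
  assert (forall p, In p l -> exists li : list I, forall x, A x /\ B p x -> exists i, In i li /\ U i x).
  { intros p Hp. apply NNPP. intro Hn2. apply Hn. exists p. split; auto. }
  clear Hn Hbad.
  assert (G : forall l', incl l' l -> exists li : list I, forall x, A x -> (exists p, In p l' /\ B p x) -> exists i, In i li /\ U i x).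
  { induction l'; intros Hinc.
    - exists nil. intros x _ [p [[] _]].
    - destruct IHl' as [li Hli]. intros z Hz; apply Hinc; right; auto.
      destruct (H a (Hinc a (or_introl eq_refl))) as [la Hla].
      exists (la ++ li). intros x Ax [p [[<-|Hp] Bp]].
      + destruct (Hla x (conj Ax Bp)) as [i [Hi Ui]]. exists i; split; auto. apply in_or_app; auto.
      + destruct (Hli x Ax (ex_intro _ p (conj Hp Bp))) as [i [Hi Ui]]. exists i; split; auto. apply in_or_app; auto. }
  destruct (G l (incl_refl l)) as [li Hli]. exists li. intros x Ax. apply Hli; auto.
Qed.

Section TBC.
Context {T : Type} (d : T -> T -> R) (Hm : is_metric d) (Hc : complete_space d)
  (Htb : forall eps, 0 < eps -> exists l : list T, forall x, exists p, In p l /\ d p x < eps).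
Context {I : Type} (U : I -> T -> Prop) (inh : inhabited T).

Definition cen (k : nat) (A : T -> Prop) : T :=
  epsilon inh (fun c => bad U (fun x => A x /\ d c x < (/2)^k)).

Fixpoint seqA (k : nat) : T -> Prop :=
  match k with
  | O => fun _ => True
  | S k => fun x => seqA k x /\ d (cen k (seqA k)) x < (/2)^k
  end.

Lemma seqA_bad : bad U (fun _ => True) -> forall k, bad U (seqA k).
Proof.
  intros H0 k. induction k. exact H0.
  simpl. unfold cen. apply (epsilon_spec inh (fun c => bad U (fun x => seqA k x /\ d c x < (/2)^k))).
  destruct (Htb ((/2)^k) ltac:(apply pow_lt; lra)) as [l Hl].
  destruct (bad_split U (seqA k) (fun p x => d p x < (/2)^k) l) as [p [_ Hp]]; auto.
  exists p; auto.
Qed.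

Lemma seqA_mono : forall j k, (j <= k)%nat -> forall x, seqA k x -> seqA j x.
Proof.
  intros j k Hjk. induction Hjk; auto. intros x [Hx _]; auto.
Qed.

End TBC.

Lemma TB_complete_compact {T : Type} (d : T -> T -> R) :
  is_metric d -> complete_space d ->
  (forall eps, 0 < eps -> exists l : list T, forall x, exists p, In p l /\ d p x < eps) ->
  compact_space (fun _ => True) d.
Proof.
  intros Hm Hc Htb I U Hop Hcov.
  apply NNPP. intro Hn.
  assert (H0 : bad U (fun _ => True)).
  { intros [l Hl]. apply Hn. exists l. intros x _. apply Hl; auto. }
  assert (inh : inhabited T).
  { apply NNPP. intro Hi. apply H0. exists nil. intros x. exfalso. apply Hi. exact (inhabits x). }
  destruct Hm as [Hp [Hz [Hs Ht]]].
  pose (A := seqA d U inh).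
  assert (Hbad := seqA_bad d Htb U inh H0).
  assert (Hne : forall k, exists x, A k x).
  { intros k. apply NNPP. intro Hk. apply (Hbad k). exists nil. intros x Hx. exfalso. apply Hk. exists x; exact Hx. }
  pose (a := fun k => epsilon inh (fun x => A (S k) x)).
  assert (Ha : forall k, A (S k) (a k)).
  { intros k. apply (epsilon_spec inh (fun x => A (S k) x)). apply Hne. }
  assert (Hac : forall j k, (j <= k)%nat -> d (cen d U inh j (A j)) (a k) < (/2)^j).
  { intros j k Hjk. assert (H := seqA_mono d U inh (S j) (S k) ltac:(lia) (a k) (Ha k)).
    destruct H as [_ H]. exact H. }
  destruct (Hc a) as [z Hzl].
  { intros eps He.
    destruct (pow_lt_1_zero (/2) ltac:(rewrite Rabs_right; lra) (eps/2) ltac:(lra)) as [N HN].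
    exists N. intros n p Hn' Hp'.
    assert (H1 := Hac N n Hn'). assert (H2 := Hac N p Hp').
    assert (H3 := HN N (le_n N)). rewrite Rabs_right in H3 by (apply Rle_ge, pow_le; lra).
    specialize (Ht (a n) (cen d U inh N (A N)) (a p)). pose proof (Hs (a n) (cen d U inh N (A N))). lra. }
  destruct (Hcov z Logic.I) as [i Hi].
  destruct (Hop i z Logic.I Hi) as [r [Hr Hr']].
  destruct (pow_lt_1_zero (/2) ltac:(rewrite Rabs_right; lra) (r/3) ltac:(lra)) as [j Hj].
  specialize (Hj j (le_n j)). rewrite Rabs_right in Hj by (apply Rle_ge, pow_le; lra).
  destruct (Hzl (r/3) ltac:(lra)) as [N HN].
  apply (Hbad (S j)). exists (i :: nil). intros x Hx. exists i. split. left; auto.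
  apply Hr'; auto.
  destruct Hx as [_ Hx].
  assert (H1 := HN (max N j) ltac:(lia)).
  assert (H2 := Hac j (max N j) ltac:(lia)).
  pose proof (Ht z (a (max N j)) x). pose proof (Ht (a (max N j)) (cen d U inh j (A j)) x).
  pose proof (Hs z (a (max N j))). pose proof (Hs (a (max N j)) (cen d U inh j (A j))).
  unfold A in *. lra.
Qed.

Lemma list_min_pos {A : Type} (l : list A) (f : A -> R) :
  exists delta, 0 < delta /\ forall a, In a l -> 0 < f a -> delta <= f a.
Proof.
  induction l. exists 1. split. lra. intros a [].
  destruct IHl as [dl [Hdl Hl]].
  destruct (Rlt_dec 0 (f a)).
  - exists (Rmin (f a) dl). split. apply Rmin_glb_lt; auto.
    intros b [<-|Hb] Hfb. apply Rmin_l. eapply Rle_trans. apply Rmin_r. apply Hl; auto.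
  - exists dl. split; auto. intros b [<-|Hb] Hfb. lra. apply Hl; auto.
Qed.

Lemma finite_union_cover {T I : Type} (S : nat -> T -> Prop) (U : I -> T -> Prop) :
  (forall n, exists l : list I, forall y, S n y -> exists i, In i l /\ U i y) ->
  forall N, exists L : list I, forall n, (n < N)%nat -> forall y, S n y -> exists i, In i L /\ U i y.
Proof.
  intros H N. induction N.
  - exists nil. intros n Hn. lia.
  - destruct IHN as [L HL]. destruct (H N) as [l Hl]. exists (l ++ L).
    intros n Hn y Hy. destruct (Nat.eq_dec n N).
    + subst. destruct (Hl y Hy) as [i [Hi Ui]]. exists i. split; auto. apply in_or_app; auto.
    + destruct (HL n ltac:(lia) y Hy) as [i [Hi Ui]]. exists i. split; auto. apply in_or_app; auto.
Qed.

Lemma compact_union {T : Type} (X Y : T -> Prop) (S : nat -> T -> Prop) (d : T -> T -> R) :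
  (forall x, X x -> Y x) -> (forall n y, S n y -> Y y) ->
  (forall y, Y y -> X y \/ exists n, S n y) ->
  (forall x, X x -> d x x = 0) ->
  (forall x y z, Y x -> Y y -> Y z -> d x z <= d x y + d y z) ->
  compact_space X d -> (forall n, compact_space (S n) d) ->
  (forall delta, 0 < delta -> exists N, forall n, (N <= n)%nat -> forall y, S n y -> exists x, X x /\ d x y < delta) ->
  compact_space Y d.
Proof.
  intros HXY HSY HY H0 Htr HcX HcS Hclose I U Hop Hcov.
  pose (V := fun (j : T * I * R) y => let '(c, i, r) := j in
          X y /\ Y c /\ 0 < r /\ (forall y', Y y' -> d c y' < 2 * r -> U i y') /\ d c y < r).
  destruct (HcX (T * I * R)%type V) as [l Hl].
  - intros [[c i] r] y Xy [_ [Yc [Hr [HU Hd]]]]. exists (r - d c y). split. lra.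
    intros y' Xy' Hd'. repeat split; auto. pose proof (Htr c y y' Yc (HXY _ Xy) (HXY _ Xy')). lra.
  - intros x Xx. destruct (Hcov x (HXY _ Xx)) as [i Ui].
    destruct (Hop i x (HXY _ Xx) Ui) as [r [Hr HU]].
    exists (x, i, r/2). simpl. repeat split; auto. lra. intros y' Yy' Hd. apply HU; auto. lra.
    rewrite H0; auto; lra.
  - destruct (list_min_pos l (fun j => snd j)) as [delta [Hdel Hdl]].
    assert (Step1 : forall x, X x -> forall y, Y y -> d x y < delta -> exists i, In i (map (fun j => snd (fst j)) l) /\ U i y).
    { intros x Xx y Yy Hd. destruct (Hl x Xx) as [[[c i] r] [Hin HV]].
      destruct HV as [_ [Yc [Hr [HU Hdc]]]]. exists i. split.
      apply (in_map (fun j : T * I * R => snd (fst j)) l (c, i, r)); auto.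
      apply HU; auto. pose proof (Hdl _ Hin Hr). simpl in H.
      pose proof (Htr c x y Yc (HXY _ Xx) Yy). lra. }
    destruct (Hclose delta Hdel) as [N HN].
    destruct (finite_union_cover S U) with (N := N) as [L HL].
    { intros n. apply (HcS n I U).
      - intros i y Sy Uy. destruct (Hop i y (HSY _ _ Sy) Uy) as [r [Hr Hr']]. exists r. split; auto.
        intros y' Sy' Hd. apply Hr'; auto. apply (HSY n); auto.
      - intros y Sy. apply Hcov. apply (HSY n); auto. }
    exists (map (fun j => snd (fst j)) l ++ L). intros y Yy.
    destruct (HY y Yy) as [Xy|[n Sy]].
    + destruct (Step1 y Xy y Yy) as [i [Hi Ui]]. rewrite H0; auto.
      exists i. split; auto. apply in_or_app; auto.
    + destruct (Compare_dec.le_lt_dec N n).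
      * destruct (HN n l0 y Sy) as [x [Xx Hd]]. destruct (Step1 x Xx y Yy Hd) as [i [Hi Ui]].
        exists i. split; auto. apply in_or_app; auto.
      * destruct (HL n l0 y Sy) as [i [Hi Ui]]. exists i. split; auto. apply in_or_app; auto.
Qed.

Lemma seg_compact {T : Type} (d : T -> T -> R) (f : R -> T) (a b : R) :
  (forall s t, a <= s <= b -> a <= t <= b -> d (f s) (f t) <= Rabs (s - t)) ->
  compact_space (fun y => exists h, a <= h <= b /\ y = f h) d.
Proof.
  intros Hf I U Hop Hcov.
  destruct (Rle_dec a b) as [Hab|Hab]; [|exists nil; intros x [h [Hh _]]; lra].
  destruct (Hcov (f a) (ex_intro _ a (conj (conj (Rle_refl a) Hab) eq_refl))) as [i0 _].
  assert (inh : inhabited (I * R)) by exact (inhabits (i0, 1)).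
  pose (Pch := fun h (p : I * R) => 0 < snd p /\ forall y, (exists h', a <= h' <= b /\ y = f h') -> d (f h) y < snd p -> U (fst p) y).
  pose (ch := fun h => epsilon inh (Pch h)).
  assert (Hch : forall h, a <= h <= b -> Pch h (ch h)).
  { intros h Hh. apply (epsilon_spec inh (Pch h)).
    destruct (Hcov (f h) (ex_intro _ h (conj Hh eq_refl))) as [i Ui].
    destruct (Hop i (f h) (ex_intro _ h (conj Hh eq_refl)) Ui) as [r [Hr Hr']].
    exists (i, r). split; auto. }
  assert (Hcond : forall x, (exists y, (fun x y => a <= x <= b /\ Rabs (y - x) < snd (ch x)) x y) -> a <= x <= b).
  { intros x [y [H _]]. auto. }
  pose (fam := mkfamily (fun x => a <= x <= b) (fun x y => a <= x <= b /\ Rabs (y - x) < snd (ch x)) Hcond).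
  destruct (compact_P3 a b fam) as [D [Hcov' [l Hl]]].
  - split.
    + intros h Hh. exists h. simpl. split; auto. unfold Rminus; rewrite Rplus_opp_r, Rabs_R0.
      apply (Hch h Hh).
    + intros x y Hy. simpl in Hy. destruct Hy as [Hx Hy].
      assert (Hp : 0 < snd (ch x) - Rabs (y - x)) by lra.
      exists (mkposreal _ Hp). intros z Hz. unfold disc in Hz. simpl in *. split; auto.
      pose proof (Rabs_triang (z - y) (y - x)). replace (z - y + (y - x)) with (z - x) in H by lra. lra.
  - exists (map (fun x => fst (ch x)) l). intros y [h [Hh ->]].
    destruct (Hcov' h Hh) as [x [[Hx Hxh] HDx]]. simpl in *.
    assert (Hin : In x l) by (apply Hl; split; auto).
    exists (fst (ch x)). split. apply (in_map (fun x => fst (ch x))); auto.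
    destruct (Hch x Hx) as [_ HU]. apply HU. exists h; auto.
    eapply Rle_lt_trans. apply Hf; auto. rewrite Rabs_minus_sym; auto.
Qed.

Fixpoint psig (l : nat -> R) (k : nat) : R :=
  match k with O => 0 | S k => psig l k + l k end.

Lemma psig_mono (l : nat -> R) : (forall j, 0 <= l j) -> forall a b, (a <= b)%nat -> psig l a <= psig l b.
Proof. intros H a b Hab. induction Hab. lra. simpl. specialize (H m). lra. Qed.

Section IC.
Context {T : Type} (d : T -> T -> R) (Hm : is_metric d).
Context (p : nat -> T) (l : nat -> R) (g : nat -> R -> T) (z : T) (S : R).
Hypothesis Hl : forall j, 0 <= l j.
Hypothesis Hg : forall j, g j 0 = p j /\ g j (l j) = p (Datatypes.S j) /\
  forall s t, 0 <= s <= l j -> 0 <= t <= l j -> d (g j s) (g j t) <= Rabs (s - t).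
Hypothesis HS1 : forall k, psig l k <= S.
Hypothesis HS2 : forall eps, 0 < eps -> exists k, S - eps < psig l k.
Hypothesis Hz : forall eps, 0 < eps -> exists N, forall n, (N <= n)%nat -> d (p n) z < eps.

Lemma ic_chain : forall a b, (a <= b)%nat -> d (p a) (p b) <= psig l b - psig l a.
Proof.
  destruct Hm as [Hp [H0 [Hs Ht]]].
  intros a b Hab. induction Hab.
  - assert (d (p a) (p a) = 0) by (apply H0; auto). lra.
  - simpl. destruct (Hg m) as [g0 [gl gd]].
    assert (A := gd 0 (l m) ltac:(specialize (Hl m); lra) ltac:(specialize (Hl m); lra)).
    rewrite g0, gl in A. rewrite Rabs_left1 in A by (specialize (Hl m); lra).
    pose proof (Ht (p a) (p m) (p (Datatypes.S m))). lra.
Qed.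

Lemma le_eps (x y : R) : (forall eps, 0 < eps -> x <= y + eps) -> x <= y.
Proof. intros H. destruct (Rle_dec x y); auto. specialize (H ((x - y)/2) ltac:(lra)). lra. Qed.

Lemma ic_tail : forall a, d (p a) z <= S - psig l a.
Proof.
  destruct Hm as [Hp [H0 [Hs Ht]]].
  intros a. apply le_eps. intros eps He.
  destruct (Hz eps He) as [N HN].
  pose proof (ic_chain a (max a N) ltac:(lia)). pose proof (HN (max a N) ltac:(lia)).
  pose proof (HS1 (max a N)). pose proof (Ht (p a) (p (max a N)) z). lra.
Qed.

Lemma ic_J : forall s, 0 <= s < S -> exists j, psig l j <= s < psig l (Datatypes.S j).
Proof.
  intros s Hs. destruct (HS2 (S - s) ltac:(lra)) as [k Hk].
  assert (forall k, s < psig l k -> exists j, psig l j <= s < psig l (Datatypes.S j)).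
  { induction k0; intros H. simpl in H. lra.
    destruct (Rlt_dec s (psig l k0)). auto. exists k0. split; auto. lra. }
  apply (H k). lra.
Qed.

Definition icJ (s : R) : nat := epsilon (inhabits 0%nat) (fun j => psig l j <= s < psig l (Datatypes.S j)).

Definition icG (s : R) : T := if Rlt_dec s S then g (icJ s) (s - psig l (icJ s)) else z.

Lemma icJ_spec : forall s, 0 <= s < S -> psig l (icJ s) <= s < psig l (Datatypes.S (icJ s)).
Proof.
  intros s Hs. unfold icJ. apply (epsilon_spec (inhabits 0%nat) (fun j => psig l j <= s < psig l (Datatypes.S j))).
  apply ic_J; auto.
Qed.

Lemma icJ_mono : forall s t, 0 <= s -> s <= t -> t < S -> (icJ s <= icJ t)%nat.
Proof.
  intros s t Hs Hst Ht. destruct (icJ_spec s ltac:(lra)). destruct (icJ_spec t ltac:(lra)).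
  destruct (Compare_dec.le_lt_dec (icJ s) (icJ t)); auto.
  assert (psig l (Datatypes.S (icJ t)) <= psig l (icJ s)) by (apply psig_mono; auto).
  lra.
Qed.

Lemma icK1 : forall s, 0 <= s < S -> forall b, (icJ s < b)%nat -> d (icG s) (p b) <= psig l b - s.
Proof.
  destruct Hm as [Hp [H0 [Hs Ht]]].
  intros s Hs' b Hb. unfold icG. destruct (Rlt_dec s S); [|lra].
  destruct (icJ_spec s Hs') as [A1 A2]. simpl in A2.
  destruct (Hg (icJ s)) as [g0 [gl gd]].
  assert (B := gd (s - psig l (icJ s)) (l (icJ s)) ltac:(lra) ltac:(specialize (Hl (icJ s)); lra)).
  rewrite gl in B. rewrite Rabs_left1 in B by lra.
  pose proof (ic_chain (Datatypes.S (icJ s)) b Hb). simpl in H.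
  pose proof (Ht (g (icJ s) (s - psig l (icJ s))) (p (Datatypes.S (icJ s))) (p b)). lra.
Qed.

Lemma icK2 : forall t, 0 <= t < S -> forall a, (a <= icJ t)%nat -> d (p a) (icG t) <= t - psig l a.
Proof.
  destruct Hm as [Hp [H0 [Hs Ht]]].
  intros t Ht' a Ha. unfold icG. destruct (Rlt_dec t S); [|lra].
  destruct (icJ_spec t Ht') as [A1 A2]. simpl in A2.
  destruct (Hg (icJ t)) as [g0 [gl gd]].
  assert (B := gd 0 (t - psig l (icJ t)) ltac:(specialize (Hl (icJ t)); lra) ltac:(lra)).
  rewrite g0 in B. rewrite Rabs_left1 in B by lra.
  pose proof (ic_chain a (icJ t) Ha).
  pose proof (Ht (p a) (p (icJ t)) (g (icJ t) (t - psig l (icJ t)))). lra.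
Qed.

Lemma ic_lip_le : forall s t, 0 <= s <= S -> 0 <= t <= S -> s <= t -> d (icG s) (icG t) <= t - s.
Proof.
  destruct Hm as [Hp [H0 [Hs Ht]]].
  intros s t Hs' Ht' Hst.
  destruct (Rlt_dec t S).
  - assert (Hj := icJ_mono s t ltac:(lra) Hst r).
    destruct (Nat.eq_dec (icJ s) (icJ t)) as [E|E].
    + unfold icG. destruct (Rlt_dec s S); [|lra]. destruct (Rlt_dec t S); [|lra].
      destruct (icJ_spec s ltac:(lra)) as [A1 A2]. destruct (icJ_spec t ltac:(lra)) as [B1 B2].
      rewrite <- E in B1, B2 |- *. simpl in A2, B2.
      destruct (Hg (icJ s)) as [_ [_ gd]].
      eapply Rle_trans. apply gd; lra. rewrite Rabs_left1 by lra. lra.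
    + pose proof (icK1 s ltac:(lra) (icJ t) ltac:(lia)).
      pose proof (icK2 t ltac:(lra) (icJ t) (le_n _)).
      pose proof (Ht (icG s) (p (icJ t)) (icG t)). lra.
  - assert (t = S) by lra. subst t.
    assert (Gz : icG S = z) by (unfold icG; destruct (Rlt_dec S S); [lra|auto]).
    rewrite Gz. destruct (Rlt_dec s S).
    + pose proof (icK1 s ltac:(lra) (Datatypes.S (icJ s)) (le_n _)).
      pose proof (ic_tail (Datatypes.S (icJ s))).
      pose proof (Ht (icG s) (p (Datatypes.S (icJ s))) z). lra.
    + assert (s = S) by lra. subst s. rewrite Gz. assert (d z z = 0) by (apply H0; auto). lra.
Qed.

Lemma ic_path : lip_path (fun _ => True) d (p O) z S.
Proof.
  destruct Hm as [Hp [H0 [Hs Ht]]].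
  assert (HS0 : 0 <= S) by (apply (HS1 O)).
  split; auto. exists icG. split; [|split; [|split]].
  - unfold icG. destruct (Rlt_dec 0 S).
    + destruct (icJ_spec 0 ltac:(lra)) as [A1 A2].
      assert (psig l 0 <= psig l (icJ 0)) by (apply psig_mono; auto; lia). simpl in H.
      replace (0 - psig l (icJ 0)) with 0 by lra. rewrite (proj1 (Hg _)).
      pose proof (ic_chain 0 (icJ 0) ltac:(lia)). simpl in H1.
      symmetry. apply H0. pose proof (Hp (p 0%nat) (p (icJ 0))). lra.
    + pose proof (ic_tail 0). simpl in H. symmetry. apply H0. pose proof (Hp (p 0%nat) z). lra.
  - unfold icG. destruct (Rlt_dec S S); [lra|auto].
  - auto.
  - intros s t Hs' Ht'. destruct (Rle_dec s t).
    + rewrite Rabs_left1 by lra. pose proof (ic_lip_le s t Hs' Ht' r). lra.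
    + rewrite Rabs_right by lra. rewrite Hs. pose proof (ic_lip_le t s Ht' Hs' ltac:(lra)). lra.
Qed.

End IC.

Lemma lip_dist {T : Type} (X : T -> Prop) (d : T -> T -> R) x y L : lip_path X d x y L -> d x y <= L.
Proof.
  intros [H0 [g [g0 [gL [_ gd]]]]]. rewrite <- g0, <- gL.
  eapply Rle_trans. apply gd; lra. rewrite Rabs_left1; lra.
Qed.

Lemma half_pow_small (y : R) : 0 < y -> exists N, forall n, (N <= n)%nat -> (/2)^n < y.
Proof.
  intros Hy. destruct (pow_lt_1_zero (/2) ltac:(rewrite Rabs_right; lra) y Hy) as [N HN].
  exists N. intros n Hn. specialize (HN n Hn). rewrite Rabs_right in HN; auto.
  apply Rle_ge, pow_le; lra.
Qed.

Section CQ.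
Context {T : Type} (d : T -> T -> R) (Hm : is_metric d) (D : T -> Prop) (C : R) (HC : 0 <= C).
Hypothesis Hdense : forall z eps, 0 < eps -> exists x, D x /\ d x z < eps.
Hypothesis Hpath : forall x y, D x -> D y -> forall eps, 0 < eps ->
  exists L, L <= C * d x y + eps /\ lip_path (fun _ => True) d x y L.

Lemma cq_approach : forall z delta, 0 < delta -> exists x, D x /\ exists L, L <= delta /\ lip_path (fun _ => True) d x z L.
Proof.
  destruct Hm as [Hp [H0 [Hs Ht]]].
  intros z delta Hdel.
  set (K := 2 * C + 1). set (eta := delta / (2 * K)).
  assert (HK : 0 < K) by (unfold K; lra).
  assert (Heta : 0 < eta) by (unfold eta; apply Rdiv_lt_0_compat; lra).
  assert (inhT : inhabited T) by exact (inhabits z).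
  pose (p := fun j => epsilon inhT (fun x => D x /\ d x z < eta * (/2)^j)).
  assert (Hpj : forall j, D (p j) /\ d (p j) z < eta * (/2)^j).
  { intros j. apply (epsilon_spec inhT (fun x => D x /\ d x z < eta * (/2)^j)).
    apply Hdense. apply Rmult_lt_0_compat; auto. apply pow_lt; lra. }
  pose (Pc := fun j (pr : R * (R -> T)) => 0 <= fst pr /\ fst pr <= K * eta * (/2)^j /\
     snd pr 0 = p j /\ snd pr (fst pr) = p (S j) /\
     forall s t, 0 <= s <= fst pr -> 0 <= t <= fst pr -> d (snd pr s) (snd pr t) <= Rabs (s - t)).
  assert (inhP : inhabited (R * (R -> T))) by exact (inhabits (0, fun _ => z)).
  pose (c := fun j => epsilon inhP (Pc j)).
  assert (Hc : forall j, Pc j (c j)).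
  { intros j. apply (epsilon_spec inhP (Pc j)).
    assert (Hq : 0 < (/2)^j) by (apply pow_lt; lra).
    destruct (Hpath (p j) (p (S j)) (proj1 (Hpj j)) (proj1 (Hpj (S j))) (eta * (/2)^j) ltac:(apply Rmult_lt_0_compat; auto))
      as [L [HL [HL0 [g [g0 [gL [_ gd]]]]]]].
    exists (L, g). unfold Pc; simpl. repeat split; auto.
    assert (A : d (p j) (p (S j)) <= 2 * eta * (/2)^j).
    { pose proof (Ht (p j) z (p (S j))). rewrite (Hs z) in H. destruct (Hpj j). destruct (Hpj (S j)).
      simpl in H4. nra. }
    assert (C * d (p j) (p (S j)) <= C * (2 * eta * (/2)^j)) by (apply Rmult_le_compat_l; auto).
    unfold K. nra. }
  pose (l := fun j => fst (c j)). pose (g := fun j => snd (c j)).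
  assert (Hl : forall j, 0 <= l j) by (intros j; apply (Hc j)).
  assert (Hbound : forall k, psig l k <= 2 * K * eta * (1 - (/2)^k)).
  { induction k. simpl. lra. simpl. destruct (Hc k) as [_ [Hk _]]. fold (l k) in Hk.
    set (q := (/2)^k) in *. set (a := K * eta) in *.
    replace (2 * K * eta) with (2 * a) in * by (unfold a; ring).
    replace (2 * a * (1 - / 2 * q)) with (2 * a * (1 - q) + a * q) by field. lra. }
  assert (Hgrow : Un_growing (psig l)) by (intros n; simpl; specialize (Hl n); lra).
  destruct (growing_cv (psig l) Hgrow) as [S HS].
  { exists (2 * K * eta). intros x [i ->]. pose proof (Hbound i). assert (0 < (/2)^i) by (apply pow_lt; lra).
    assert (0 < K * eta) by (apply Rmult_lt_0_compat; auto).
    set (q := (/2)^i) in *. set (a := K * eta) in *.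
    replace (2 * K * eta) with (2 * a) in * by (unfold a; ring). nra. }
  assert (HS1 := growing_ineq _ _ Hgrow HS).
  assert (HS2 : forall eps, 0 < eps -> exists k, S - eps < psig l k).
  { intros eps He. destruct (HS eps He) as [N HN]. exists N. specialize (HN N (le_n N)).
    unfold Rdist in HN. apply Rabs_def2 in HN. lra. }
  exists (p O). split. apply Hpj. exists S. split.
  - apply le_eps. intros eps He. destruct (HS2 eps He) as [k Hk]. pose proof (Hbound k).
    assert (0 < (/2)^k) by (apply pow_lt; lra).
    assert (2 * K * eta = delta) by (unfold eta; field; lra).
    assert (0 < K * eta) by (apply Rmult_lt_0_compat; auto).
    set (q := (/2)^k) in *. set (a := K * eta) in *.
    replace (2 * K * eta) with (2 * a) in * by (unfold a; ring). nra.
  - apply (ic_path d Hm p l g z S Hl); auto.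
    + intros j. destruct (Hc j) as [_ [_ [A [B E]]]]. auto.
    + intros eps He. destruct (half_pow_small (eps / eta) ltac:(apply Rdiv_lt_0_compat; auto)) as [N HN].
      exists N. intros n Hn. specialize (HN n Hn). destruct (Hpj n) as [_ Hd].
      apply Rlt_trans with (eta * (/2)^n); auto.
      apply (Rmult_lt_compat_l eta) in HN; auto. replace (eta * (eps / eta)) with eps in HN by (field; lra). auto.
Qed.

Lemma completion_quasi : quasiconvex (fun _ => True) d C.
Proof.
  assert (Hm' := Hm). destruct Hm' as [Hp [H0 [Hs Ht]]].
  apply lip_quasi. intros z w _ _ eps He.
  set (delta := eps / (2 * C + 3)).
  assert (Hdel : 0 < delta) by (unfold delta; apply Rdiv_lt_0_compat; lra).
  destruct (cq_approach z delta Hdel) as [x [Dx [L1 [HL1 P1]]]].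
  destruct (cq_approach w delta Hdel) as [y [Dy [L2 [HL2 P2]]]].
  destruct (Hpath x y Dx Dy delta Hdel) as [L3 [HL3 P3]].
  pose proof (lip_dist _ _ _ _ _ P1). pose proof (lip_dist _ _ _ _ _ P2).
  assert (Hxy : d x y <= d z w + 2 * delta).
  { pose proof (Ht x z y). pose proof (Ht z w y). pose proof (Hs w y). lra. }
  assert (C * d x y <= C * (d z w + 2 * delta)) by (apply Rmult_le_compat_l; auto).
  exists (L1 + L3 + L2). split.
  - assert (eps = (2 * C + 3) * delta) by (unfold delta; field; lra). nra.
  - apply (lip_concat _ _ z y w (L1 + L3) L2). intros; apply Ht.
    apply (lip_concat _ _ z x y L1 L3). intros; apply Ht. apply lip_rev; auto. auto. exact P2.
Qed.
End CQ.

Definition spike (k : nat) (c : R) (i : nat) : R := if Nat.eqb i k then c else 0.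

Lemma sum_spike k c n : sum_f_R0 (spike k c) n = if Nat.leb k n then c else 0.
Proof.
  induction n; simpl.
  - unfold spike. destruct k; simpl; auto.
  - rewrite IHn. unfold spike. destruct (Nat.leb_spec k n); destruct (Nat.eqb_spec (S n) k);
    destruct (Nat.leb_spec k (S n)); try lia; lra.
Qed.

Lemma is_series_spike k c : is_series (spike k c) c.
Proof.
  apply is_series_Reals. intros eps He. exists k. intros n Hn.
  rewrite sum_spike. destruct (Nat.leb_spec k n); [|lia]. unfold Rdist. rewrite Rminus_eq_0, Rabs_R0; auto.
Qed.

Definition spk3 (n m : nat) (A B C : R) (i : nat) : R := spike 0 A i + spike n B i + spike m C i.

Lemma is_series_spk3 n m A B C : is_series (spk3 n m A B C) (A + B + C).
Proof.
  unfold spk3. apply (is_series_plus (fun i => spike 0 A i + spike n B i) (spike m C) (A + B) C).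
  apply (is_series_plus (spike 0 A) (spike n B) A B). apply is_series_spike. apply is_series_spike. apply is_series_spike.
Qed.

Lemma theta_sym u v : theta u v = theta v u.
Proof. unfold theta. apply Series_ext. intros; apply Rabs_minus_sym. Qed.

Lemma theta_refl u : theta u u = 0.
Proof.
  unfold theta. rewrite (Series_ext _ (fun _ => 0)). 
  apply is_series_unique. apply (is_series_ext (spike 0 0)). intros; unfold spike; destruct (_ =? _); auto.
  apply is_series_spike.
  intros; unfold Rminus; rewrite Rplus_opp_r, Rabs_R0; auto.
Qed.

Definition tent (n : nat) (t : R) : nat -> R :=
  fun i => if Nat.eqb i 0 then / 2 ^ (n + 1) * t + (1/2 - / 2 ^ n)
           else if Nat.eqb i n then / 2 ^ (n + 1) * alpha t else 0.

Lemma alpha_props t : 0 <= t <= 1 -> 0 <= alpha t /\ alpha t <= t /\ alpha t <= 1 - t.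
Proof. intros Ht. unfold alpha. destruct (Rle_dec t (1/2)); lra. Qed.

Lemma alpha_lip s t : Rabs (alpha s - alpha t) <= Rabs (s - t).
Proof.
  unfold alpha. destruct (Rle_dec s (1/2)); destruct (Rle_dec t (1/2));
  unfold Rabs; repeat destruct Rcase_abs; lra.
Qed.

Lemma pow2_inv_S k : / 2 ^ (k + 1) = / 2 ^ k * / 2.
Proof. rewrite pow_add. simpl. rewrite Rmult_1_r. rewrite Rinv_mult; auto. Qed.

Lemma pow2_inv_pos k : 0 < / 2 ^ k.
Proof. apply Rinv_0_lt_compat, pow_lt; lra. Qed.

Lemma pow2_inv_le a b : (a <= b)%nat -> / 2 ^ b <= / 2 ^ a.
Proof.
  intros H. apply Rinv_le_contravar. apply pow_lt; lra. apply Rle_pow; lra || lia.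
Qed.

Lemma Yset_tent y : Yset y <-> (exists n, (1 <= n)%nat /\ exists t, 0 <= t <= 1 /\ y = tent n t) \/ y = x_inf.
Proof. unfold Yset, tent. tauto. Qed.

Ltac abs_solve := unfold Rabs; repeat destruct Rcase_abs; nra.

Lemma dom_tt_lt n m t t' : (1 <= n)%nat -> (n < m)%nat -> 0 <= t <= 1 -> 0 <= t' <= 1 ->
  let A := Rabs (tent n t 0 - tent m t' 0) in
  let B := / 2 ^ (n + 1) * alpha t in let C := / 2 ^ (m + 1) * alpha t' in
  (forall i, Rabs (tent n t i - tent m t' i) <= spk3 n m A B C i) /\ 0 <= B /\ 0 <= C /\ A + B + C <= 2 * A.
Proof.
  intros Hn Hm Ht Ht' A B C.
  destruct (alpha_props t Ht) as [a1 [a2 a3]]. destruct (alpha_props t' Ht') as [b1 [b2 b3]].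
  pose proof (pow2_inv_pos (n + 1)) as P1. pose proof (pow2_inv_pos (m + 1)) as P2.
  assert (HB : 0 <= B) by (unfold B; nra). assert (HC : 0 <= C) by (unfold C; nra).
  assert (Hlast : A + B + C <= 2 * A).
  { assert (E1 : / 2 ^ n = 2 * / 2 ^ (n + 1)) by (rewrite pow2_inv_S; field; try (apply pow_nonzero; lra)).
    assert (E2 : / 2 ^ m <= / 2 ^ (n + 1)) by (apply pow2_inv_le; lia).
    assert (Hd : tent m t' 0 - tent n t 0 >= B + C).
    { unfold tent, B, C; simpl. nra. }
    unfold A. rewrite Rabs_minus_sym. rewrite Rabs_right by lra. lra. }
  refine (conj _ (conj HB (conj HC Hlast))).
  intros i. unfold spk3, spike, tent.
  destruct (Nat.eqb_spec i 0); destruct (Nat.eqb_spec i n); destruct (Nat.eqb_spec i m); try lia;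
  destruct (Nat.eqb_spec 0 0); destruct (Nat.eqb_spec m 0); destruct (Nat.eqb_spec n 0); try lia;
  unfold A, B, C, tent; simpl; try abs_solve.
Qed.

Lemma dom_tt_eq n t t' : (1 <= n)%nat -> 0 <= t <= 1 -> 0 <= t' <= 1 ->
  let A := Rabs (tent n t 0 - tent n t' 0) in
  let B := / 2 ^ (n + 1) * Rabs (alpha t - alpha t') in
  (forall i, Rabs (tent n t i - tent n t' i) <= spk3 n n A B 0 i) /\ 0 <= B /\ A + B + 0 <= 2 * A.
Proof.
  intros Hn Ht Ht' A B.
  pose proof (pow2_inv_pos (n + 1)) as P1.
  assert (HB : 0 <= B) by (unfold B; pose proof (Rabs_pos (alpha t - alpha t')); nra).
  assert (Hlast : A + B + 0 <= 2 * A).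
  { assert (A = / 2 ^ (n + 1) * Rabs (t - t')).
    { unfold A, tent; simpl. replace (/ 2 ^ (n + 1) * t + (1 / 2 - / 2 ^ n) - (/ 2 ^ (n + 1) * t' + (1 / 2 - / 2 ^ n)))
        with (/ 2 ^ (n + 1) * (t - t')) by ring. rewrite Rabs_mult, Rabs_right by lra. auto. }
    pose proof (alpha_lip t t'). unfold B. nra. }
  refine (conj _ (conj HB Hlast)).
  intros i. unfold spk3, spike, tent.
  destruct (Nat.eqb_spec i 0); destruct (Nat.eqb_spec i n); try lia;
  destruct (Nat.eqb_spec 0 0); destruct (Nat.eqb_spec n 0); try lia;
  unfold A, B, tent; simpl; try abs_solve.
Qed.

Lemma dom_tx n t : (1 <= n)%nat -> 0 <= t <= 1 ->
  let A := Rabs (tent n t 0 - x_inf 0) in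
  let B := / 2 ^ (n + 1) * alpha t in
  (forall i, Rabs (tent n t i - x_inf i) <= spk3 n n A B 0 i) /\ 0 <= B /\ A + B + 0 <= 2 * A.
Proof.
  intros Hn Ht A B.
  destruct (alpha_props t Ht) as [a1 [a2 a3]].
  pose proof (pow2_inv_pos (n + 1)) as P1.
  assert (HB : 0 <= B) by (unfold B; nra).
  assert (Hlast : A + B + 0 <= 2 * A).
  { assert (E1 : / 2 ^ n = 2 * / 2 ^ (n + 1)) by (rewrite pow2_inv_S; field; try (apply pow_nonzero; lra)).
    assert (Hd : x_inf 0 - tent n t 0 >= B).
    { unfold tent, B, x_inf; simpl. nra. }
    unfold A. rewrite Rabs_minus_sym. rewrite Rabs_right by lra. lra. }
  refine (conj _ (conj HB Hlast)).
  intros i. unfold spk3, spike, tent, x_inf.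
  destruct (Nat.eqb_spec i 0); destruct (Nat.eqb_spec i n); try lia;
  destruct (Nat.eqb_spec 0 0); destruct (Nat.eqb_spec n 0); try lia;
  unfold A, B, tent, x_inf; simpl; try abs_solve.
Qed.

Lemma Ydom y z : Yset y -> Yset z -> exists n m B C, 0 <= B /\ 0 <= C /\
  (forall i, Rabs (y i - z i) <= spk3 n m (Rabs (y 0%nat - z 0%nat)) B C i) /\
  Rabs (y 0%nat - z 0%nat) + B + C <= 2 * Rabs (y 0%nat - z 0%nat).
Proof.
  intros Hy Hz. apply Yset_tent in Hy. apply Yset_tent in Hz.
  destruct Hy as [[n [Hn [t [Ht ->]]]]| ->]; destruct Hz as [[m [Hm [t' [Ht' ->]]]]| ->].
  - destruct (Nat.lt_total n m) as [Hlt|[Heq|Hgt]].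
    + destruct (dom_tt_lt n m t t' Hn Hlt Ht Ht') as [H1 [H2 [H3 H4]]].
      exists n, m, (/ 2 ^ (n + 1) * alpha t), (/ 2 ^ (m + 1) * alpha t'). split; [exact H2|split; [exact H3|split; [exact H1|exact H4]]].
    + subst m. destruct (dom_tt_eq n t t' Hn Ht Ht') as [H1 [H2 H4]].
      exists n, n, (/ 2 ^ (n + 1) * Rabs (alpha t - alpha t')), 0. split; [exact H2|split; [lra|split; [exact H1|exact H4]]].
    + destruct (dom_tt_lt m n t' t Hm Hgt Ht' Ht) as [H1 [H2 [H3 H4]]].
      exists m, n, (/ 2 ^ (m + 1) * alpha t'), (/ 2 ^ (n + 1) * alpha t). split; [exact H2|split; [exact H3|split]].
      * intros i. rewrite Rabs_minus_sym, (Rabs_minus_sym (tent n t 0)). apply H1.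
      * rewrite (Rabs_minus_sym (tent n t 0)). exact H4.
  - destruct (dom_tx n t Hn Ht) as [H1 [H2 H4]].
    exists n, n, (/ 2 ^ (n + 1) * alpha t), 0. split; [exact H2|split; [lra|split; [exact H1|exact H4]]].
  - destruct (dom_tx m t' Hm Ht') as [H1 [H2 H4]].
    exists m, m, (/ 2 ^ (m + 1) * alpha t'), 0. split; [exact H2|split; [lra|split]].
    * intros i. rewrite Rabs_minus_sym, (Rabs_minus_sym (x_inf 0)). apply H1.
    * rewrite (Rabs_minus_sym (x_inf 0)). exact H4.
  - exists 1%nat, 1%nat, 0, 0. split; [lra|split; [lra|split]].
    + intros i. unfold Rminus. rewrite !Rplus_opp_r, Rabs_R0. unfold spk3, spike.
      destruct (_ =? _); destruct (_ =? _); lra.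
    + unfold Rminus. rewrite Rplus_opp_r, Rabs_R0. lra.
Qed.

Lemma spk3_nonneg n m A B C i : 0 <= A -> 0 <= B -> 0 <= C -> 0 <= spk3 n m A B C i.
Proof. intros. unfold spk3, spike. repeat destruct (_ =? _); lra. Qed.

Lemma Y_ex y z : Yset y -> Yset z -> ex_series (fun i => Rabs (y i - z i)).
Proof.
  intros Hy Hz. destruct (Ydom y z Hy Hz) as [n [m [B [C [HB [HC [Hp Hl]]]]]]].
  apply (@ex_series_le R_AbsRing R_CompleteNormedModule _ (spk3 n m (Rabs (y 0%nat - z 0%nat)) B C)).
  - intros i. unfold norm; simpl. unfold abs; simpl. rewrite Rabs_Rabsolu. apply Hp.
  - eexists. apply is_series_spk3.
Qed.

Lemma Y_upper y z : Yset y -> Yset z -> theta y z <= 2 * Rabs (y 0%nat - z 0%nat).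
Proof.
  intros Hy Hz. destruct (Ydom y z Hy Hz) as [n [m [B [C [HB [HC [Hp Hl]]]]]]].
  unfold theta. eapply Rle_trans. apply (Series_le _ (spk3 n m (Rabs (y 0%nat - z 0%nat)) B C)).
  - intros i. split. apply Rabs_pos. apply Hp.
  - eexists. apply is_series_spk3.
  - rewrite (is_series_unique _ _ (is_series_spk3 _ _ _ _ _)). auto.
Qed.

Lemma Y_coord y z : Yset y -> Yset z -> forall i, Rabs (y i - z i) <= theta y z.
Proof.
  intros Hy Hz i. unfold theta.
  rewrite <- (is_series_unique _ _ (is_series_spike i (Rabs (y i - z i)))).
  apply Series_le. intros k. unfold spike. destruct (Nat.eqb_spec k i). subst; split; [apply Rabs_pos|lra].
  split; [lra|apply Rabs_pos]. apply Y_ex; auto.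
Qed.

Lemma Y_nonneg y z : Yset y -> Yset z -> 0 <= theta y z.
Proof. intros Hy Hz. eapply Rle_trans. apply Rabs_pos. apply (Y_coord y z Hy Hz 0%nat). Qed.

Lemma Y_eq y z : Yset y -> Yset z -> theta y z = 0 -> y = z.
Proof.
  intros Hy Hz H. apply functional_extensionality. intros i.
  pose proof (Y_coord y z Hy Hz i). rewrite H in H0. pose proof (Rabs_pos (y i - z i)).
  assert (Rabs (y i - z i) = 0) by lra. apply Rabs_eq_0 in H2. lra.
Qed.

Lemma Y_tri x y z : Yset x -> Yset y -> Yset z -> theta x z <= theta x y + theta y z.
Proof.
  intros Hx Hy Hz. unfold theta. rewrite <- Series_plus by (apply Y_ex; auto).
  apply Series_le. intros i. split. apply Rabs_pos.
  replace (x i - z i) with ((x i - y i) + (y i - z i)) by ring. apply Rabs_triang.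
  apply (ex_series_plus (fun i => Rabs (x i - y i)) (fun i => Rabs (y i - z i))); apply Y_ex; auto.
Qed.

Lemma psum_tele {T : Type} (d : T -> T -> R) (g : R -> T) (b : R -> R) (t : nat -> R) (n : nat) :
  (forall i, (i < n)%nat -> d (g (t i)) (g (t (S i))) <= b (t (S i)) - b (t i)) ->
  psum d g t n <= b (t n) - b (t O).
Proof.
  induction n; intros H; simpl. lra.
  pose proof (IHn (fun i Hi => H i ltac:(lia))). pose proof (H n ltac:(lia)). lra.
Qed.

Lemma lip_continuity (f : R -> R) (K : R) : 0 < K -> (forall x y, Rabs (f x - f y) <= K * Rabs (x - y)) -> continuity f.
Proof.
  intros HK Hf x. unfold continuity_pt, continue_in, limit1_in, limit_in. intros eps He.
  exists (eps / K). split. apply Rdiv_lt_0_compat; auto.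
  intros y [_ Hy]. simpl in *. unfold Rdist in *.
  eapply Rle_lt_trans. apply Hf. apply (Rmult_lt_compat_l K) in Hy; auto.
  replace (K * (eps / K)) with eps in Hy by (field; lra). lra.
Qed.

Section Gamma.
Context (gamma : R -> nat -> R) (Hg : gamma_hyp gamma).

Lemma G_Y t : 0 <= t <= 1 -> Yset (gamma t).
Proof. destruct Hg as [H _]. apply H. Qed.

Lemma F1 s t : 0 <= s <= 1 -> 0 <= t <= 1 -> theta (gamma s) (gamma t) <= Rabs (s - t).
Proof.
  assert (K : forall s t, 0 <= s <= 1 -> 0 <= t <= 1 -> s <= t -> theta (gamma s) (gamma t) <= t - s).
  { intros s0 t0 Hs Ht Hst. destruct Hg as [_ [_ [_ [_ [_ Hl]]]]].
    destruct (Hl s0 t0 ltac:(lra) Hst ltac:(lra)) as [Hle _].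
    specialize (Hle (fun i => if Nat.eqb i 0 then s0 else t0) 1%nat).
    simpl in Hle. rewrite Rplus_0_l in Hle. apply Hle. split; auto. split; auto. intros i Hi. destruct i; simpl; [lra|lia]. }
  intros Hs Ht. destruct (Rle_dec s t).
  - rewrite Rabs_left1 by lra. pose proof (K s t Hs Ht r). lra.
  - rewrite Rabs_right by lra. rewrite theta_sym. apply K; auto; lra.
Qed.

Definition ga (t : R) : R := 2 * gamma t 0%nat.

Lemma ga_lower s t : 0 <= s <= 1 -> 0 <= t <= 1 -> Rabs (ga s - ga t) <= 2 * theta (gamma s) (gamma t).
Proof.
  intros Hs Ht. unfold ga. replace (2 * gamma s 0%nat - 2 * gamma t 0%nat) with (2 * (gamma s 0%nat - gamma t 0%nat)) by ring.
  rewrite Rabs_mult, Rabs_right by lra. pose proof (Y_coord _ _ (G_Y s Hs) (G_Y t Ht) 0%nat). lra.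
Qed.

Lemma ga_upper s t : 0 <= s <= 1 -> 0 <= t <= 1 -> theta (gamma s) (gamma t) <= Rabs (ga s - ga t).
Proof.
  intros Hs Ht. unfold ga. replace (2 * gamma s 0%nat - 2 * gamma t 0%nat) with (2 * (gamma s 0%nat - gamma t 0%nat)) by ring.
  rewrite Rabs_mult, Rabs_right by lra. apply Y_upper; apply G_Y; auto.
Qed.

Lemma ga0 : ga 0 = 0.
Proof. unfold ga. destruct Hg as [_ [_ [_ [H _]]]]. rewrite H. lra. Qed.

Lemma ga1 : ga 1 = 1.
Proof. unfold ga. destruct Hg as [_ [_ [_ [_ [H _]]]]]. rewrite H. unfold x_inf. simpl. lra. Qed.

Lemma ga_inj s t : 0 <= s <= 1 -> 0 <= t <= 1 -> ga s = ga t -> s = t.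
Proof.
  intros Hs Ht E. destruct Hg as [_ [_ [Hi _]]]. apply Hi; auto.
  apply Y_eq; try apply G_Y; auto. pose proof (ga_upper s t Hs Ht). rewrite E in H.
  unfold Rminus in H. rewrite Rplus_opp_r, Rabs_R0 in H. pose proof (Y_nonneg _ _ (G_Y s Hs) (G_Y t Ht)). lra.
Qed.

Definition gae (x : R) : R := ga (Rmax 0 (Rmin 1 x)).

Lemma gae_cont : continuity gae.
Proof.
  apply (lip_continuity gae 4). lra. intros x y. unfold gae.
  assert (A : forall z, 0 <= Rmax 0 (Rmin 1 z) <= 1).
  { intros z. unfold Rmax, Rmin. repeat destruct Rle_dec; lra. }
  pose proof (ga_lower _ _ (A x) (A y)). pose proof (F1 _ _ (A x) (A y)).
  assert (Rabs (Rmax 0 (Rmin 1 x) - Rmax 0 (Rmin 1 y)) <= Rabs (x - y)).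
  { unfold Rmax, Rmin. repeat destruct Rle_dec; unfold Rabs; repeat destruct Rcase_abs; lra. }
  pose proof (Rabs_pos (x - y)). lra.
Qed.

Lemma gae_eq x : 0 <= x <= 1 -> gae x = ga x.
Proof. intros H. unfold gae. f_equal. unfold Rmax, Rmin. repeat destruct Rle_dec; lra. Qed.

Lemma ga_pos t : 0 < t <= 1 -> 0 < ga t.
Proof.
  intros Ht. destruct (Rlt_dec 0 (ga t)); auto. exfalso.
  destruct (Req_dec t 1). subst. rewrite ga1 in n. lra.
  destruct (IVT_gen gae t 1 0 gae_cont) as [c [Hc Ec]].
  - rewrite gae_eq, gae_eq, ga1 by lra. unfold Rmin, Rmax. repeat destruct Rle_dec; lra.
  - rewrite Rmin_left, Rmax_right in Hc by lra. rewrite gae_eq in Ec by lra.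
    rewrite <- ga0 in Ec. apply ga_inj in Ec; lra.
Qed.

Lemma ga_mono s t : 0 <= s -> s < t -> t <= 1 -> ga s < ga t.
Proof.
  intros Hs Hst Ht. destruct (Req_dec s 0). subst. rewrite ga0. apply ga_pos; lra.
  destruct (Rlt_dec (ga s) (ga t)); auto. exfalso.
  assert (P := ga_pos t ltac:(lra)).
  destruct (IVT_gen gae 0 s (ga t) gae_cont) as [c [Hc Ec]].
  - rewrite gae_eq, gae_eq, ga0 by lra. unfold Rmin, Rmax. repeat destruct Rle_dec; lra.
  - rewrite Rmin_left, Rmax_right in Hc by lra. rewrite gae_eq in Ec by lra.
    apply ga_inj in Ec; lra.
Qed.

Lemma ga_id t : 0 <= t <= 1 -> ga t = t.
Proof.
  assert (K : forall s t, 0 <= s -> s <= t -> t <= 1 -> t - s <= ga t - ga s).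
  { intros s0 t0 Hs Hst Ht. destruct Hg as [_ [_ [_ [_ [_ Hl]]]]].
    destruct (Hl s0 t0 Hs Hst Ht) as [_ Happ].
    apply le_eps. intros eps He. destruct (Happ eps He) as [tt [n [Hp Hlt]]].
    pose proof (partition_bounds _ _ _ _ Hp) as Hb.
    destruct Hp as [H0 [Hn Hm]].
    assert (psum theta gamma tt n <= ga (tt n) - ga (tt 0%nat)).
    { apply psum_tele. intros i Hi. pose proof (Hb i ltac:(lia)). pose proof (Hb (S i) ltac:(lia)).
      pose proof (Hm i Hi).
      eapply Rle_trans. apply ga_upper; lra.
      destruct (Req_dec (tt i) (tt (S i))). rewrite H3. unfold Rminus; rewrite Rplus_opp_r, Rabs_R0; lra.
      pose proof (ga_mono (tt i) (tt (S i)) ltac:(lra) ltac:(lra) ltac:(lra)).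
      rewrite Rabs_left1 by lra. lra. }
    rewrite Hn, H0 in H. lra. }
  intros Ht. pose proof (K 0 t ltac:(lra) ltac:(lra) ltac:(lra)). pose proof (K t 1 ltac:(lra) ltac:(lra) ltac:(lra)).
  rewrite ga0 in H. rewrite ga1 in H0. lra.
Qed.

Lemma F2 s t : 0 <= s <= 1 -> 0 <= t <= 1 -> Rabs (s - t) <= 2 * theta (gamma s) (gamma t).
Proof.
  intros Hs Ht. pose proof (ga_lower s t Hs Ht). rewrite ga_id, ga_id in H; auto.
Qed.

Lemma thr_props (r : R) : 0 < r ->
  (forall s t, 0 <= s <= r -> 0 <= t <= r -> theta_r gamma r s t <= Rabs (s - t)) /\
  (forall s t, 0 <= s <= r -> 0 <= t <= r -> Rabs (s - t) <= 2 * theta_r gamma r s t) /\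
  (forall s t, 0 <= s <= r -> 0 <= t <= r -> 0 <= theta_r gamma r s t) /\
  (forall s t, theta_r gamma r s t = theta_r gamma r t s) /\
  (forall s, theta_r gamma r s s = 0) /\
  (forall s t u, 0 <= s <= r -> 0 <= t <= r -> 0 <= u <= r -> theta_r gamma r s u <= theta_r gamma r s t + theta_r gamma r t u).
Proof.
  intros Hr.
  assert (Sc : forall s, 0 <= s <= r -> 0 <= s / r <= 1).
  { intros s Hs. split. apply Rdiv_le_0_compat; lra. apply (Rmult_le_reg_r r); auto. field_simplify; lra. }
  unfold theta_r. repeat split.
  - intros s t Hs Ht. pose proof (F1 _ _ (Sc s Hs) (Sc t Ht)).
    replace (s - t) with (r * (s / r - t / r)) by (field; lra). rewrite Rabs_mult, (Rabs_right r) by lra.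
    apply Rmult_le_compat_l; lra.
  - intros s t Hs Ht. pose proof (F2 _ _ (Sc s Hs) (Sc t Ht)).
    replace (s - t) with (r * (s / r - t / r)) by (field; lra). rewrite Rabs_mult, (Rabs_right r) by lra.
    nra.
  - intros s t Hs Ht. pose proof (Y_nonneg _ _ (G_Y _ (Sc s Hs)) (G_Y _ (Sc t Ht))). nra.
  - intros s t. rewrite theta_sym. auto.
  - intros s. rewrite theta_refl. ring.
  - intros s t u Hs Ht Hu. pose proof (Y_tri _ _ _ (G_Y _ (Sc s Hs)) (G_Y _ (Sc t Ht)) (G_Y _ (Sc u Hu))). nra.
Qed.
End Gamma.

Definition Qs (q : nat -> nat -> nat -> R) (m : nat) (y : nat -> R) : Prop := exists n, y = q m n.

Section Levels.
Context (gamma : R -> nat -> R) (q : nat -> nat -> nat -> R).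

Definition tr m x := trunc (S m) x.
Definition dd m n := theta_r gamma (rad m n).
Definition same m x y := Qs q m (tr m x) /\ tr m x = tr m y.
Definition Hh m x := if excluded_middle_informative (Qs q m (tr m x)) then dd m (idx q m x) (x (S m)) 0 else 0.

Lemma P_S m x : Pk gamma q (S m) x <-> (forall i, (S m < i)%nat -> x i = 0) /\
  ((Pk gamma q m (tr m x) /\ ~ Qs q m (tr m x) /\ x (S m) = 0) \/
   (exists n, tr m x = q m n /\ 0 <= x (S m) <= rad m n)).
Proof.
  unfold Pk. simpl. destruct (level gamma q m) as [[P0 r0] L0]. simpl. unfold tr, Qs. tauto.
Qed.

Lemma P_0 x : Pk gamma q 0 x <-> 0 <= x 0%nat <= 1 /\ forall i, (0 < i)%nat -> x i = 0.
Proof. unfold Pk. simpl. tauto. Qed.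

Lemma rho_0 x y : rhok gamma q 0 x y = theta_r gamma 1 (x 0%nat) (y 0%nat).
Proof. reflexivity. Qed.

Lemma L_S m x : Lk gamma q (S m) x <-> (forall i, (S m < i)%nat -> x i = 0) /\
  ((Lk gamma q m (tr m x) /\ x (S m) = 0) \/ (exists n, tr m x = q m n /\ x (S m) = rad m n)).
Proof.
  unfold Lk. simpl. destruct (level gamma q m) as [[P0 r0] L0]. simpl. unfold tr. tauto.
Qed.

Lemma rho_S_raw m x y : rhok gamma q (S m) x y =
  if excluded_middle_informative (same m x y) then dd m (idx q m x) (x (S m)) (y (S m))
  else (if excluded_middle_informative (Qs q m (tr m x)) then dd m (idx q m x) (x (S m)) 0 else 0)
       + rhok gamma q m (tr m x) (tr m y)
       + (if excluded_middle_informative (Qs q m (tr m y)) then dd m (idx q m y) 0 (y (S m)) else 0).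
Proof.
  unfold rhok. simpl. destruct (level gamma q m) as [[P0 r0] L0] eqn:E. simpl. unfold same, tr, dd, Qs. reflexivity.
Qed.

Lemma dd_sym m n s t : dd m n s t = dd m n t s.
Proof. unfold dd, theta_r. rewrite theta_sym. auto. Qed.

Lemma rho_S m x y : rhok gamma q (S m) x y =
  if excluded_middle_informative (same m x y) then dd m (idx q m x) (x (S m)) (y (S m))
  else Hh m x + rhok gamma q m (tr m x) (tr m y) + Hh m y.
Proof.
  rewrite rho_S_raw. unfold Hh. destruct (excluded_middle_informative (same m x y)); auto.
  destruct (excluded_middle_informative (Qs q m (tr m y))); auto. rewrite (dd_sym m (idx q m y) 0). auto.
Qed.

Lemma rad_pos m n : 0 < rad m n.
Proof. unfold rad. apply pow2_inv_pos. Qed.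

Lemma Pk_supp m x : Pk gamma q m x -> forall i, (m < i)%nat -> x i = 0.
Proof.
  destruct m. intros H; apply P_0 in H; apply H.
  intros H; apply P_S in H; apply H.
Qed.

Lemma tr_id m x : (forall i, (m < i)%nat -> x i = 0) -> tr m x = x.
Proof.
  intros H. apply functional_extensionality. intros i. unfold tr, trunc.
  destruct (Nat.ltb_spec i (S m)); auto. symmetry; apply H; lia.
Qed.

Lemma tr_tr m x : tr m (tr m x) = tr m x.
Proof. apply functional_extensionality. intros i. unfold tr, trunc. destruct (Nat.ltb_spec i (S m)); auto. Qed.

Lemma tr_Sm m x : tr m x (S m) = 0.
Proof. unfold tr, trunc. destruct (Nat.ltb_spec (S m) (S m)); auto; lia. Qed.

Definition upd (y : nat -> R) (k : nat) (h : R) : nat -> R := fun i => if Nat.eqb i k then h else y i.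

Lemma decomp m x : (forall i, (S m < i)%nat -> x i = 0) -> x = upd (tr m x) (S m) (x (S m)).
Proof.
  intros H. apply functional_extensionality. intros i. unfold upd, tr, trunc.
  destruct (Nat.eqb_spec i (S m)). subst; auto.
  destruct (Nat.ltb_spec i (S m)); auto. apply H; lia.
Qed.

Lemma tr_upd m y h : (forall i, (m < i)%nat -> y i = 0) -> tr m (upd y (S m) h) = y.
Proof.
  intros H. apply functional_extensionality. intros i. unfold upd, tr, trunc.
  destruct (Nat.ltb_spec i (S m)). destruct (Nat.eqb_spec i (S m)); auto; lia.
  symmetry. apply H. lia.
Qed.

Lemma upd_Sm y m h : upd y (S m) h (S m) = h.
Proof. unfold upd. rewrite Nat.eqb_refl. auto. Qed.

Hypothesis Hq : choices_hyp gamma q.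

Lemma q_in m n : Pk gamma q m (q m n).
Proof. apply (Hq m). Qed.

Lemma q_inj m n n' : q m n = q m n' -> n = n'.
Proof. apply (Hq m). Qed.

Lemma idx_spec m x : Qs q m (tr m x) -> tr m x = q m (idx q m x).
Proof.
  intros H. unfold idx. apply (epsilon_spec (inhabits 0%nat) (fun n => trunc (S m) x = q m n)). exact H.
Qed.

Lemma idx_eq m x n : tr m x = q m n -> idx q m x = n.
Proof.
  intros H. apply q_inj with m. rewrite <- (idx_spec m x). auto. exists n; auto.
Qed.

End Levels.

Section Metric.
Context (gamma : R -> nat -> R) (q : nat -> nat -> nat -> R).
Context (Hg : gamma_hyp gamma) (Hq : choices_hyp gamma q).

Notation P := (Pk gamma q).
Notation rho := (rhok gamma q).

Lemma PS_info m x : P (S m) x -> P m (tr m x) /\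
  (Qs q m (tr m x) -> 0 <= x (S m) <= rad m (idx q m x)) /\ (~ Qs q m (tr m x) -> x (S m) = 0).
Proof.
  intros H. apply P_S in H. destruct H as [_ [[H1 [H2 H3]]|[n [H1 H2]]]].
  - split; auto. split; auto. intros; contradiction.
  - rewrite (idx_eq gamma q Hq m x n H1). split. rewrite H1. apply q_in; auto.
    split; auto. intros Hn; exfalso; apply Hn; exists n; auto.
Qed.

Lemma idx_tr m x y : tr m x = tr m y -> idx q m x = idx q m y.
Proof. intros H. unfold idx. unfold tr in H. rewrite H. auto. Qed.

Lemma same_sym m x y : same q m x y -> same q m y x.
Proof. intros [H1 H2]. split. rewrite <- H2; auto. auto. Qed.

Lemma same_trans m x y z : same q m x y -> same q m y z -> same q m x z.
Proof. intros [H1 H2] [H3 H4]. split; auto. congruence. Qed.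

Lemma Hh_Q m x : Qs q m (tr m x) -> Hh gamma q m x = dd gamma m (idx q m x) (x (S m)) 0.
Proof. intros H. unfold Hh. destruct (excluded_middle_informative _); [auto|contradiction]. Qed.

Lemma Hh_nQ m x : ~ Qs q m (tr m x) -> Hh gamma q m x = 0.
Proof. intros H. unfold Hh. destruct (excluded_middle_informative _); [contradiction|auto]. Qed.

Lemma ddp m n :
  (forall s t, 0 <= s <= rad m n -> 0 <= t <= rad m n -> dd gamma m n s t <= Rabs (s - t)) /\
  (forall s t, 0 <= s <= rad m n -> 0 <= t <= rad m n -> Rabs (s - t) <= 2 * dd gamma m n s t) /\
  (forall s t, 0 <= s <= rad m n -> 0 <= t <= rad m n -> 0 <= dd gamma m n s t) /\
  (forall s t, dd gamma m n s t = dd gamma m n t s) /\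
  (forall s, dd gamma m n s s = 0) /\
  (forall s t u, 0 <= s <= rad m n -> 0 <= t <= rad m n -> 0 <= u <= rad m n -> dd gamma m n s u <= dd gamma m n s t + dd gamma m n t u).
Proof. exact (thr_props gamma Hg (rad m n) (rad_pos m n)). Qed.

Lemma Hh_nonneg m x : P (S m) x -> 0 <= Hh gamma q m x.
Proof.
  intros Hx. destruct (PS_info m x Hx) as [_ [HQ _]]. unfold Hh.
  destruct (excluded_middle_informative _). 2: lra.
  destruct (ddp m (idx q m x)) as [_ [_ [Hn _]]]. apply Hn. auto. pose proof (rad_pos m (idx q m x)); lra.
Qed.

Lemma metric_all m : MX (P m) (rho m).
Proof.
  induction m.
  - destruct (thr_props gamma Hg 1 ltac:(lra)) as [_ [_ [Hn [Hs [Hr Ht]]]]].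
    split; [|split; [|split]]; intros; rewrite ?rho_0.
    + apply Hn; apply P_0; auto.
    + apply Hr.
    + apply Hs.
    + apply Ht; apply P_0; auto.
  - destruct IHm as [Mn [Mr [Ms Mt]]].
    split; [|split; [|split]].
    + intros x y Hx Hy. rewrite rho_S. destruct (excluded_middle_informative (same q m x y)) as [Sxy|Sxy].
      * destruct Sxy as [HQ Heq]. destruct (PS_info m x Hx) as [_ [Hx2 _]]. destruct (PS_info m y Hy) as [_ [Hy2 _]].
        rewrite <- Heq in Hy2. rewrite <- (idx_tr m x y Heq) in Hy2.
        destruct (ddp m (idx q m x)) as [_ [_ [Hn _]]]. apply Hn; auto.
      * pose proof (Hh_nonneg m x Hx). pose proof (Hh_nonneg m y Hy).
        pose proof (Mn _ _ (proj1 (PS_info m x Hx)) (proj1 (PS_info m y Hy))). lra.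
    + intros x Hx. rewrite rho_S. destruct (excluded_middle_informative (same q m x x)) as [Sxx|Sxx].
      * destruct (ddp m (idx q m x)) as [_ [_ [_ [_ [Hr _]]]]]. apply Hr.
      * assert (~ Qs q m (tr m x)) by (intro H; apply Sxx; split; auto).
        rewrite Hh_nQ by auto. rewrite Mr by (apply (PS_info m x Hx)). lra.
    + intros x y Hx Hy. rewrite !rho_S.
      destruct (excluded_middle_informative (same q m x y)) as [Sxy|Sxy];
      destruct (excluded_middle_informative (same q m y x)) as [Syx|Syx].
      * rewrite (idx_tr m x y (proj2 Sxy)). apply dd_sym.
      * exfalso; apply Syx, same_sym; auto.
      * exfalso; apply Sxy, same_sym; auto.
      * rewrite Ms by (apply PS_info; auto). lra.
    + intros x y z Hx Hy Hz. rewrite !rho_S.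
      destruct (PS_info m x Hx) as [Bx [Qx nQx]]. destruct (PS_info m y Hy) as [By [Qy nQy]].
      destruct (PS_info m z Hz) as [Bz [Qz nQz]].
      pose proof (Hh_nonneg m x Hx). pose proof (Hh_nonneg m y Hy). pose proof (Hh_nonneg m z Hz).
      destruct (excluded_middle_informative (same q m x y)) as [Sxy|Sxy];
      destruct (excluded_middle_informative (same q m y z)) as [Syz|Syz];
      destruct (excluded_middle_informative (same q m x z)) as [Sxz|Sxz].
      * destruct Sxy as [HQ E1]. destruct Syz as [_ E2].
        rewrite <- (idx_tr m x y E1). 
        specialize (Qx HQ). rewrite E1 in HQ. specialize (Qy HQ). rewrite E2 in HQ. specialize (Qz HQ).
        rewrite <- (idx_tr m x y E1) in Qy. rewrite <- (idx_tr m y z E2), <- (idx_tr m x y E1) in Qz.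
        destruct (ddp m (idx q m x)) as [_ [_ [_ [_ [_ Ht]]]]]. apply Ht; auto.
      * exfalso; apply Sxz; eapply same_trans; eauto.
      * exfalso; apply Syz; eapply same_trans; [apply same_sym|]; eauto.
      * destruct Sxy as [HQ E1]. rewrite (Hh_Q m x HQ). assert (HQy : Qs q m (tr m y)) by (rewrite <- E1; auto).
        rewrite (Hh_Q m y HQy). rewrite <- (idx_tr m x y E1). rewrite E1.
        specialize (Qx HQ). specialize (Qy HQy). rewrite <- (idx_tr m x y E1) in Qy.
        destruct (ddp m (idx q m x)) as [_ [_ [_ [_ [_ Ht]]]]].
        pose proof (Ht (x (S m)) (y (S m)) 0 Qx Qy ltac:(pose proof (rad_pos m (idx q m x)); lra)). lra.
      * exfalso; apply Sxy; eapply same_trans; [|apply same_sym]; eauto.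
      * destruct Syz as [HQ E2]. rewrite (Hh_Q m y HQ). assert (HQz : Qs q m (tr m z)) by (rewrite <- E2; auto).
        rewrite (Hh_Q m z HQz). rewrite <- (idx_tr m y z E2). rewrite E2.
        specialize (Qy HQ). specialize (Qz HQz). rewrite <- (idx_tr m y z E2) in Qz.
        destruct (ddp m (idx q m y)) as [_ [_ [_ [Hs [_ Ht]]]]].
        pose proof (Ht (z (S m)) (y (S m)) 0 Qz Qy ltac:(pose proof (rad_pos m (idx q m y)); lra)).
        rewrite (Hs (z (S m)) (y (S m))) in H2. lra.
      * destruct Sxz as [HQ E3]. rewrite (Hh_Q m x HQ). assert (HQz : Qs q m (tr m z)) by (rewrite <- E3; auto).
        rewrite (Hh_Q m z HQz). rewrite <- (idx_tr m x z E3).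
        specialize (Qx HQ). specialize (Qz HQz). rewrite <- (idx_tr m x z E3) in Qz.
        destruct (ddp m (idx q m x)) as [_ [_ [Hn [Hs [_ Ht]]]]].
        pose proof (Ht (x (S m)) 0 (z (S m)) Qx ltac:(pose proof (rad_pos m (idx q m x)); lra) Qz).
        rewrite (Hs 0 (z (S m))) in H2.
        pose proof (Mn _ _ Bx By). pose proof (Mn _ _ By Bz).
        lra.
      * pose proof (Mt _ _ _ Bx By Bz). lra.
Qed.
End Metric.

Section Incl.
Context (gamma : R -> nat -> R) (q : nat -> nat -> nat -> R).
Context (Hg : gamma_hyp gamma) (Hq : choices_hyp gamma q).

Notation P := (Pk gamma q).
Notation rho := (rhok gamma q).

Lemma P_incl m x : P m x -> P (S m) x.
Proof.
  intros Hx. assert (Hs := Pk_supp gamma q m x Hx). rewrite P_S. rewrite (tr_id m x Hs).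
  split. intros i Hi; apply Hs; lia.
  destruct (classic (Qs q m x)) as [[n Hn]|Hn].
  - right. exists n. split; auto. rewrite (Hs (S m)) by lia. pose proof (rad_pos m n). lra.
  - left. split; [auto|split; [auto|apply Hs; lia]].
Qed.

Lemma rho_incl m x y : P m x -> P m y -> rho (S m) x y = rho m x y.
Proof.
  intros Hx Hy. destruct (metric_all gamma q Hg Hq m) as [_ [Mr _]].
  rewrite rho_S. rewrite (tr_id m x (Pk_supp gamma q m x Hx)), (tr_id m y (Pk_supp gamma q m y Hy)).
  rewrite (Pk_supp gamma q m x Hx (S m)), (Pk_supp gamma q m y Hy (S m)) by lia.
  destruct (excluded_middle_informative (same q m x y)) as [[HQ E]|Sxy].
  - rewrite tr_id in E by (apply (Pk_supp gamma q m x Hx)). rewrite tr_id in E by (apply (Pk_supp gamma q m y Hy)).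
    subst y. unfold dd, theta_r. rewrite theta_refl. rewrite Mr; auto. ring.
  - unfold Hh. rewrite (Pk_supp gamma q m x Hx (S m)), (Pk_supp gamma q m y Hy (S m)) by lia.
    unfold dd, theta_r. rewrite ?theta_refl.
    destruct (excluded_middle_informative _); destruct (excluded_middle_informative _); rewrite ?theta_refl; ring.
Qed.

Lemma P_incl_le m M x : (m <= M)%nat -> P m x -> P M x.
Proof. intros H. induction H; auto. intros Hx. apply P_incl; auto. Qed.

Lemma rho_incl_le m M x y : (m <= M)%nat -> P m x -> P m y -> rho M x y = rho m x y.
Proof.
  intros H. induction H; auto. intros Hx Hy. rewrite rho_incl. auto.
  apply P_incl_le with m; auto. apply P_incl_le with m; auto.
Qed.

Lemma rho_inf_eq m x y : P m x -> P m y -> rho_inf gamma q x y = rho m x y.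
Proof.
  intros Hx Hy. unfold rho_inf.
  set (M := epsilon (inhabits 0%nat) (fun m => P m x /\ P m y)).
  assert (HM : P M x /\ P M y).
  { apply (epsilon_spec (inhabits 0%nat) (fun m => P m x /\ P m y)). exists m; auto. }
  destruct HM as [HMx HMy].
  rewrite <- (rho_incl_le M (max m M) x y ltac:(lia) HMx HMy).
  apply rho_incl_le; auto. lia.
Qed.

Definition seg m n h := upd (q m n) (S m) h.

Lemma tr_seg m n h : tr m (seg m n h) = q m n.
Proof. apply tr_upd. apply (Pk_supp gamma q m). apply q_in; auto. Qed.

Lemma seg_in m n h : 0 <= h <= rad m n -> P (S m) (seg m n h).
Proof.
  intros Hh. apply P_S. split.
  - intros i Hi. unfold seg, upd. destruct (Nat.eqb_spec i (S m)). lia.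
    apply (Pk_supp gamma q m). apply q_in; auto. lia.
  - right. exists n. rewrite tr_seg. split; auto. unfold seg. rewrite upd_Sm. auto.
Qed.

Lemma seg0 m n : seg m n 0 = q m n.
Proof.
  apply functional_extensionality. intros i. unfold seg, upd. destruct (Nat.eqb_spec i (S m)); auto.
  subst. symmetry. apply (Pk_supp gamma q m). apply q_in; auto. lia.
Qed.

Lemma rho_seg m n s t : rho (S m) (seg m n s) (seg m n t) = dd gamma m n s t.
Proof.
  rewrite rho_S. destruct (excluded_middle_informative (same q m (seg m n s) (seg m n t))) as [S1|S1].
  - rewrite (idx_eq gamma q Hq m _ n (tr_seg m n s)). unfold seg. rewrite !upd_Sm. auto.
  - exfalso. apply S1. split. exists n. apply tr_seg. rewrite !tr_seg. auto.
Qed.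

Lemma view m x : P (S m) x -> (P m x /\ ~ Qs q m x) \/ exists n h, 0 <= h <= rad m n /\ x = seg m n h.
Proof.
  intros Hx. assert (Hx' := Hx). apply P_S in Hx'. destruct Hx' as [Hs [[H1 [H2 H3]]|[n [H1 H2]]]].
  - assert (E : tr m x = x).
    { apply tr_id. intros i Hi. destruct (Nat.eq_dec i (S m)). subst; auto. apply Hs; lia. }
    rewrite E in *. left; auto.
  - right. exists n, (x (S m)). split; auto. rewrite (decomp m x Hs) at 1. rewrite H1. auto.
Qed.

Lemma near_tr m x : P (S m) x -> rho (S m) x (tr m x) <= / 2 ^ (m + 2).
Proof.
  intros Hx. destruct (PS_info gamma q Hq m x Hx) as [Bx [Qx nQx]].
  destruct (metric_all gamma q Hg Hq m) as [_ [Mr _]].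
  rewrite rho_S. rewrite tr_tr.
  destruct (excluded_middle_informative (same q m x (tr m x))) as [[HQ E]|S1].
  - rewrite tr_Sm. specialize (Qx HQ).
    destruct (ddp gamma Hg m (idx q m x)) as [H1 _].
    eapply Rle_trans. apply H1; auto. pose proof (rad_pos m (idx q m x)); lra.
    rewrite Rminus_0_r, Rabs_right by lra.
    eapply Rle_trans. apply Qx. unfold rad. apply pow2_inv_le. lia.
  - assert (nQ : ~ Qs q m (tr m x)) by (intros HQ; apply S1; split; auto; rewrite tr_tr; auto).
    rewrite (Hh_nQ gamma q m x nQ). rewrite (Hh_nQ gamma q m (tr m x)) by (rewrite tr_tr; auto).
    rewrite Mr by auto. pose proof (pow2_inv_pos (m + 2)). lra.
Qed.

Lemma near_lower m k x : P (m + k) x -> exists y, P m y /\ rho (m + k) x y <= / 2 ^ (m + 1) - / 2 ^ (m + k + 1).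
Proof.
  revert x. induction k; intros x Hx.
  - exists x. rewrite Nat.add_0_r in *. split; auto.
    destruct (metric_all gamma q Hg Hq m) as [_ [Mr _]]. rewrite Mr; auto. lra.
  - replace (m + S k)%nat with (S (m + k)) in * by lia.
    destruct (PS_info gamma q Hq (m + k) x Hx) as [Bx _].
    destruct (IHk (tr (m + k) x) Bx) as [y [Hy Hd]].
    exists y. split; auto.
    assert (Hy' : P (m + k) y) by (apply P_incl_le with m; auto; lia).
    destruct (metric_all gamma q Hg Hq (S (m + k))) as [_ [_ [_ Mt]]].
    pose proof (Mt x (tr (m + k) x) y Hx (P_incl _ _ Bx) (P_incl _ _ Hy')).
    rewrite (rho_incl (m + k) (tr (m + k) x) y Bx Hy') in H.
    pose proof (near_tr (m + k) x Hx).
    assert (E : / 2 ^ (m + k + 1) = 2 * / 2 ^ (S (m + k) + 1)).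
    { replace (S (m + k) + 1)%nat with ((m + k + 1) + 1)%nat by lia. rewrite (pow2_inv_S (m + k + 1)). field. apply pow_nonzero; lra. }
    replace (m + k + 2)%nat with (S (m + k) + 1)%nat in H0 by lia. lra.
Qed.

End Incl.

Lemma compact_ext {T : Type} (X X' : T -> Prop) (d d' : T -> T -> R) :
  compact_space X d -> (forall y, X y <-> X' y) -> (forall x y, X x -> X y -> d x y = d' x y) ->
  compact_space X' d'.
Proof.
  intros Hc HX Hd I U Hop Hcov.
  destruct (Hc I U) as [l Hl].
  - intros i x Hx Hu. apply HX in Hx as Hx'. destruct (Hop i x Hx' Hu) as [r [Hr Hr']].
    exists r. split; auto. intros y Hy Hxy. apply Hr'. apply HX; auto. rewrite <- Hd; auto.
  - intros x Hx. apply Hcov. apply HX; auto.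
  - exists l. intros x Hx. apply Hl. apply HX; auto.
Qed.

Section Main.
Context (gamma : R -> nat -> R) (q : nat -> nat -> nat -> R).
Context (Hg : gamma_hyp gamma) (Hq : choices_hyp gamma q).

Notation P := (Pk gamma q).
Notation rho := (rhok gamma q).

Definition f0 (h : R) : nat -> R := fun i => if Nat.eqb i 0 then h else 0.

Lemma P0_f0 y : P 0 y <-> exists h, 0 <= h <= 1 /\ y = f0 h.
Proof.
  rewrite P_0. split.
  - intros [H1 H2]. exists (y 0%nat). split; auto. apply functional_extensionality. intros i.
    unfold f0. destruct (Nat.eqb_spec i 0). subst; auto. apply H2; lia.
  - intros [h [Hh ->]]. unfold f0. simpl. split; auto. intros i Hi. destruct (Nat.eqb_spec i 0); auto; lia.
Qed.

Lemma f0_lip s t : 0 <= s <= 1 -> 0 <= t <= 1 -> rho 0 (f0 s) (f0 t) <= Rabs (s - t).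
Proof.
  intros Hs Ht. rewrite rho_0. unfold f0; simpl.
  destruct (thr_props gamma Hg 1 ltac:(lra)) as [H _]. apply H; auto.
Qed.

Lemma seg_lip m n s t : 0 <= s <= rad m n -> 0 <= t <= rad m n -> rho (S m) (seg q m n s) (seg q m n t) <= Rabs (s - t).
Proof.
  intros Hs Ht. rewrite (rho_seg gamma q Hq). destruct (ddp gamma Hg m n) as [H _]. apply H; auto.
Qed.

Lemma P_compact m : compact_space (P m) (rho m).
Proof.
  induction m.
  - apply (compact_ext (fun y => exists h, 0 <= h <= 1 /\ y = f0 h) _ (rho 0) (rho 0)).
    + apply seg_compact. apply f0_lip.
    + intros y. rewrite P0_f0. tauto.
    + auto.
  - destruct (metric_all gamma q Hg Hq (S m)) as [_ [Mr [_ Mt]]].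
    apply (compact_union (P m) (P (S m)) (fun n y => exists h, 0 <= h <= rad m n /\ y = seg q m n h)).
    + apply (P_incl gamma q).
    + intros n y [h [Hh ->]]. apply (seg_in gamma q Hq); auto.
    + intros y Hy. destruct (view gamma q m y Hy) as [[H1 _]|[n [h [Hh ->]]]]. left; auto.
      right. exists n, h. auto.
    + intros x Hx. apply Mr. apply (P_incl gamma q); auto.
    + intros; apply Mt; auto.
    + apply (compact_ext (P m) (P m) (rho m) (rho (S m))); [exact IHm|intros; tauto|intros; symmetry; apply (rho_incl gamma q Hg Hq); auto].
    + intros n. apply seg_compact. apply seg_lip.
    + intros delta Hdel. destruct (half_pow_small delta Hdel) as [N HN].
      exists N. intros n Hn y [h [Hh ->]]. exists (q m n). split. apply (q_in gamma q Hq).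
      rewrite <- (seg0 gamma q Hq m n). eapply Rle_lt_trans. apply seg_lip. pose proof (rad_pos m n); lra. auto.
      rewrite Rminus_0_l, Rabs_Ropp, Rabs_right by lra. eapply Rle_lt_trans. apply Hh.
      unfold rad. apply Rle_lt_trans with (/ 2 ^ n). apply pow2_inv_le; lia.
      rewrite <- pow_inv. apply HN; auto.
Qed.

End Main.

Section Paths.
Context (gamma : R -> nat -> R) (q : nat -> nat -> nat -> R).
Context (Hg : gamma_hyp gamma) (Hq : choices_hyp gamma q).

Notation P := (Pk gamma q).
Notation rho := (rhok gamma q).

Lemma descent m x : P (S m) x -> exists l, l <= 2 * Hh gamma q m x /\ lip_path (P (S m)) (rho (S m)) x (tr m x) l.
Proof.
  intros Hx. destruct (metric_all gamma q Hg Hq (S m)) as [_ [Mr _]].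
  destruct (view gamma q m x Hx) as [[H1 H2]|[n [h [Hh ->]]]].
  - assert (E : tr m x = x) by (apply tr_id; apply (Pk_supp gamma q m); auto).
    exists 0. rewrite E. rewrite (Hh_nQ gamma q m x) by (rewrite E; auto). split. lra.
    apply lip_const; auto. rewrite Mr; auto; lra.
  - rewrite (tr_seg gamma q Hq). rewrite <- (seg0 gamma q Hq m n).
    exists (Rabs (h - 0)). split.
    + rewrite (Hh_Q gamma q m). rewrite (idx_eq gamma q Hq m _ n (tr_seg gamma q Hq m n h)).
      unfold seg. rewrite upd_Sm. destruct (ddp gamma Hg m n) as [_ [H2 _]]. apply H2; auto.
      pose proof (rad_pos m n); lra.
      exists n. apply (tr_seg gamma q Hq).
    + apply (lip_seg (P (S m)) (rho (S m)) (seg q m n) 0 (rad m n)); auto.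
      * intros; apply (seg_in gamma q Hq); auto.
      * intros; apply (seg_lip gamma q Hg Hq); auto.
      * pose proof (rad_pos m n); lra.
Qed.

Lemma P_paths m : forall x y, P m x -> P m y -> forall eps, 0 < eps ->
  exists L, L <= 2 * rho m x y + eps /\ lip_path (P m) (rho m) x y L.
Proof.
  induction m.
  - intros x y Hx Hy eps He. apply P0_f0 in Hx as [h1 [Hh1 ->]]. apply P0_f0 in Hy as [h2 [Hh2 ->]].
    exists (Rabs (h1 - h2)). split.
    + rewrite rho_0. unfold f0; simpl. destruct (thr_props gamma Hg 1 ltac:(lra)) as [_ [H _]].
      pose proof (H h1 h2 Hh1 Hh2). lra.
    + apply (lip_seg (P 0) (rho 0) f0 0 1); auto.
      * intros s Hs. apply P0_f0. exists s; auto.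
      * apply (f0_lip gamma q Hg).
  - intros x y Hx Hy eps He.
    destruct (metric_all gamma q Hg Hq (S m)) as [_ [_ [_ Mt]]].
    destruct (classic (same q m x y)) as [Sxy|Sxy].
    + destruct Sxy as [HQ E].
      destruct (view gamma q m x Hx) as [[H1 H2]|[n [hx [Hhx Ex]]]].
      { exfalso. apply H2. rewrite tr_id in HQ; auto. apply (Pk_supp gamma q m); auto. }
      destruct (view gamma q m y Hy) as [[H1 H2]|[n' [hy [Hhy Ey]]]].
      { exfalso. apply H2. rewrite (tr_id m y) in E by (apply (Pk_supp gamma q m); auto). rewrite <- E. auto. }
      subst x y. rewrite !(tr_seg gamma q Hq) in E. apply (q_inj gamma q Hq) in E. subst n'.
      exists (Rabs (hx - hy)). split.
      * rewrite (rho_seg gamma q Hq). destruct (ddp gamma Hg m n) as [_ [H2 _]]. pose proof (H2 hx hy Hhx Hhy). lra.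
      * apply (lip_seg (P (S m)) (rho (S m)) (seg q m n) 0 (rad m n)); auto.
        -- intros; apply (seg_in gamma q Hq); auto.
        -- intros; apply (seg_lip gamma q Hg Hq); auto.
    + destruct (PS_info gamma q Hq m x Hx) as [Bx _]. destruct (PS_info gamma q Hq m y Hy) as [By _].
      destruct (descent m x Hx) as [lx [Hlx Px]]. destruct (descent m y Hy) as [ly [Hly Py]].
      destruct (IHm (tr m x) (tr m y) Bx By eps He) as [L [HL PL]].
      assert (PL' : lip_path (P (S m)) (rho (S m)) (tr m x) (tr m y) L).
      { apply (lip_map (P m) (rho m) (P (S m)) (rho (S m)) (fun a => a)); auto.
        - intros; apply (P_incl gamma q); auto.
        - intros. rewrite (rho_incl gamma q Hg Hq); auto. lra. }
      exists (lx + L + ly). split.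
      * rewrite rho_S. destruct (excluded_middle_informative (same q m x y)); [contradiction|]. lra.
      * apply (lip_concat _ _ x (tr m y) y (lx + L) ly). intros; apply Mt; auto.
        apply (lip_concat _ _ x (tr m x) (tr m y) lx L). intros; apply Mt; auto. auto. auto.
        apply lip_rev; auto.
Qed.

Lemma P_quasi m : quasiconvex (P m) (rho m) 2.
Proof. apply lip_quasi. apply P_paths. Qed.

End Paths.

Section Compl.
Context (gamma : R -> nat -> R) (q : nat -> nat -> nat -> R).
Context (Hg : gamma_hyp gamma) (Hq : choices_hyp gamma q).
Context {T : Type} (d : T -> T -> R) (e : (nat -> R) -> T) (Hcomp : is_completion gamma q d e).

Notation P := (Pk gamma q).
Notation rho := (rhok gamma q).

Lemma e_iso m x y : P m x -> P m y -> d (e x) (e y) = rho m x y.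
Proof.
  intros Hx Hy. destruct Hcomp as [_ [_ [Hi _]]]. rewrite Hi. apply (rho_inf_eq gamma q Hg Hq); auto.
  exists m; auto. exists m; auto.
Qed.

Lemma haus eps : 0 < eps -> exists K : nat, forall m, (K <= m)%nat ->
  hausdorff_le d (fun z => exists x, P m x /\ z = e x) (fun _ => True) eps.
Proof.
  intros He. destruct Hcomp as [[Hp [H0 [Hs Ht]]] [_ [_ Hden]]].
  destruct (half_pow_small (eps / 2) ltac:(lra)) as [K HK].
  exists K. intros m Hm. split.
  - intros a _ e' He'. exists a. split; auto. assert (d a a = 0) by (apply H0; auto). lra.
  - intros b _ e' He'. destruct (Hden b (eps / 2) ltac:(lra)) as [x [[M HM] Hx]].
    destruct (Compare_dec.le_lt_dec M m).
    + exists (e x). split. exists x. split; auto. apply (P_incl_le gamma q M); auto.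
      rewrite Hs. lra.
    + destruct (near_lower gamma q Hg Hq m (M - m) x) as [y [Hy Hd]].
      { replace (m + (M - m))%nat with M by lia. auto. }
      exists (e y). split. exists y; auto.
      assert (Hy' : P (m + (M - m)) y) by (apply (P_incl_le gamma q m); auto; lia).
      assert (HM' : P (m + (M - m)) x) by (replace (m + (M - m))%nat with M by lia; auto).
      rewrite <- (e_iso _ x y HM' Hy') in Hd.
      pose proof (HK (m + 1)%nat ltac:(lia)). rewrite pow_inv in H.
      pose proof (pow2_inv_pos (m + (M - m) + 1)).
      pose proof (Ht b (e x) (e y)). rewrite (Hs b (e x)) in H2. lra.
Qed.

Lemma T_TB eps : 0 < eps -> exists l : list T, forall z, exists p, In p l /\ d p z < eps.
Proof.
  intros He. assert (Hm := proj1 Hcomp). destruct Hm as [Hp [H0 [Hs Ht]]].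
  destruct (haus (eps / 3) ltac:(lra)) as [K HK].
  destruct (compact_TB (P K) (rho K) (metric_all gamma q Hg Hq K) (P_compact gamma q Hg Hq K) (eps / 3) ltac:(lra)) as [l0 Hl0].
  exists (map e l0). intros z.
  destruct (HK K (le_n K)) as [_ H2]. destruct (H2 z Logic.I (eps / 2) ltac:(lra)) as [a [[y [Hy ->]] Hd]].
  destruct (Hl0 y Hy) as [p [Hin [Hpx Hpd]]].
  exists (e p). split. apply in_map; auto.
  rewrite <- (e_iso K p y Hpx Hy) in Hpd.
  pose proof (Ht (e p) (e y) z). rewrite (Hs z) in Hd. lra.
Qed.

Lemma T_compact : compact_space (fun _ => True) d.
Proof.
  destruct Hcomp as [Hm [Hc _]]. apply TB_complete_compact; auto. apply T_TB.
Qed.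

Lemma T_quasi : quasiconvex (fun _ => True) d 2.
Proof.
  destruct Hcomp as [Hm [Hc [Hi Hden]]].
  apply (completion_quasi d Hm (fun z => exists x, Pinf gamma q x /\ z = e x) 2 ltac:(lra)).
  - intros z eps He. destruct (Hden z eps He) as [x [Hx Hd]]. exists (e x). split; auto. exists x; auto.
  - intros z1 z2 [x [[m1 Hx] ->]] [y [[m2 Hy] ->]] eps He.
    assert (Hx' : P (max m1 m2) x) by (apply (P_incl_le gamma q m1); auto; lia).
    assert (Hy' : P (max m1 m2) y) by (apply (P_incl_le gamma q m2); auto; lia).
    destruct (P_paths gamma q Hg Hq (max m1 m2) x y Hx' Hy' eps He) as [L [HL PL]].
    exists L. split. rewrite (e_iso _ x y Hx' Hy'). auto.
    apply (lip_map (P (max m1 m2)) (rho (max m1 m2)) (fun _ => True) d e); auto.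
    intros a b Ha Hb. rewrite (e_iso _ a b Ha Hb). lra.
Qed.
End Compl.

Theorem proposition4p9 (gamma : R -> nat -> R) (q : nat -> nat -> nat -> R) :
  gamma_hyp gamma -> choices_hyp gamma q ->
  (forall m : nat, compact_space (Pk gamma q m) (rhok gamma q m) /\
                   quasiconvex (Pk gamma q m) (rhok gamma q m) 2) /\
  (forall (T : Type) (d : T -> T -> R) (e : (nat -> R) -> T),
     is_completion gamma q d e ->
     compact_space (fun _ => True) d /\ quasiconvex (fun _ => True) d 2 /\
     (forall eps, 0 < eps -> exists K : nat, forall m, (K <= m)%nat ->
        hausdorff_le d (fun z => exists x, Pk gamma q m x /\ z = e x) (fun _ => True) eps)).
Proof.
  intros Hg Hq. split.
  - intros m. split. apply P_compact; auto. apply P_quasi; auto.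
  - intros T d e Hc. split. apply (T_compact gamma q Hg Hq d e Hc). split.
    apply (T_quasi gamma q Hg Hq d e Hc). apply (haus gamma q Hg Hq d e Hc).
Qed.
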